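(* Let $0\le \alpha<1$ and let $f=h+\overline{g}\in \mathcal{P}^{0}_{\mathcal{H}}(\alpha)$. Then for every $z\in\mathbb{D}$, $$|z|+\sum_{n=2}^{\infty}\frac{2(1-\alpha)(-1)^{n-1}}{n}|z|^{n}\;\le\; |f(z)|\;\le\; |z|+\sum_{n=2}^{\infty}\frac{2(1-\alpha)}{n}|z|^{n}.$$ Both inequalities are sharp: for $f_\alpha(z)=z+\sum_{n=2}^{\infty}\frac{2(1-\alpha)}{n}z^n$ (which belongs to $\mathcal{P}^{0}_{\mathcal{H}}(\alpha)$), equality holds in the right-hand inequality at $z=r$ and in the left-hand inequality at $z=-r$, for every $r\in[0,1)$.
   Context: $\mathbb{D}=\{z\in\mathbb{C}:|z|<1\}$. $\mathcal{H}_0$ denotes the class of harmonic functions $f=h+\overline{g}$ on $\mathbb{D}$, where $h,g$ are analytic in $\mathbb{D}$ of the form $h(z)=z+\sum_{n=2}^\infty a_nz^n$ and $g(z)=\sum_{n=2}^\infty b_nz^n$. For $0\le\alpha<1$, $\mathcal{P}^{0}_{\mathcal{H}}(\alpha)$ is the set of $f=h+\overline{g}\in\mathcal{H}_0$ such that $\operatorname{Re}(h'(z)-\alpha)>|g'(z)|$ for all $z\in\mathbb{D}$. *)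

(* Defs.v *)
From Stdlib Require Import Reals Lra.
From Coquelicot Require Import Coquelicot.
Open Scope R_scope.

Definition series_on_disk (a : nat -> C) (h : C -> C) : Prop :=
  forall z : C, Cmod z < 1 -> is_pseries a z (h z).

(* The class P^0_H(alpha): f = h + conj g with h(z) = z + sum_{n>=2} a_n z^n,
   g(z) = sum_{n>=2} b_n z^n analytic in D, and Re(h'(z) - alpha) > |g'(z)|
   on D (h', g' are complex derivatives). *)
Definition in_PH0 (alpha : R) (h g : C -> C) : Prop :=
  (exists a b : nat -> C,
      series_on_disk a h /\ series_on_disk b g /\
      a 0%nat = RtoC 0 /\ a 1%nat = RtoC 1 /\
      b 0%nat = RtoC 0 /\ b 1%nat = RtoC 0) /\
  (forall z : C, Cmod z < 1 ->
     exists dh dg : C,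
       is_derive h z dh /\ is_derive g z dg /\
       Re (Cminus dh (RtoC alpha)) > Cmod dg).

Definition cf (alpha : R) (n : nat) : R :=
  match n with
  | O | S O => 0
  | _ => 2 * (1 - alpha) / INR n
  end.

Definition upper_bd (alpha r : R) : R :=
  r + Series (fun n => cf alpha n * r ^ n).

Definition lower_bd (alpha r : R) : R :=
  r + Series (fun n => cf alpha n * (-1) ^ (n - 1) * r ^ n).

Definition falpha_coef (alpha : R) (n : nat) : C :=
  match n with
  | O => RtoC 0
  | S O => RtoC 1
  | _ => RtoC (cf alpha n)
  end.

(* Main.v *)
Require Import Defs.
From Stdlib Require Import Reals Lra Lia IndefiniteDescription.
From Coquelicot Require Import Coquelicot.
Open Scope R_scope.

Lemma series_eps {K : AbsRing} {V : NormedModule K} (t : nat -> V) (l : V) :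
  is_series t l <-> forall eps : posreal, exists N, forall n, (N <= n)%nat ->
    norm (minus (sum_n t n) l) < eps.
Proof.
  unfold is_series. split.
  - intros H eps. pose proof (proj1 (filterlim_locally_ball_norm (K:=K) (U:=V) (F:=eventually) (sum_n t) l) H) as H'.
    destruct (H' eps) as [N HN]. exists N. intros n Hn. apply HN; auto.
  - intros H. apply (proj2 (filterlim_locally_ball_norm (K:=K) (U:=V) (F:=eventually) (sum_n t) l)). intros eps.
    destruct (H eps) as [N HN]. exists N. intros n Hn. apply HN; auto.
Qed.

Notation Cis := (@is_series C_AbsRing C_NormedModule).

Lemma pow_n_C (z : C) n : pow_n z n = Cpow z n.
Proof. induction n; simpl; try rewrite IHn; reflexivity. Qed.

Lemma is_pseries_C (a : nat -> C) z l :
  is_pseries a z l <-> Cis (fun n => (a n * Cpow z n)%C) l.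
Proof.
  unfold is_pseries. split; apply is_series_ext; intros n;
  rewrite <- (pow_n_C z n); apply Cmult_comm.
Qed.

Lemma Cnorm_minus (a b : C) : @norm C_AbsRing C_NormedModule (minus a b) = Cmod (a - b)%C.
Proof. reflexivity. Qed.

Lemma Cis_eps (t : nat -> C) (l : C) :
  Cis t l <-> forall eps, 0 < eps -> exists N, forall n, (N <= n)%nat ->
    Cmod (sum_n t n - l)%C < eps.
Proof.
  rewrite series_eps. split.
  - intros H eps He. destruct (H (mkposreal eps He)) as [N HN]. exists N.
    intros n Hn. rewrite <- Cnorm_minus. apply (HN n Hn).
  - intros H eps. destruct (H eps (cond_pos eps)) as [N HN]. exists N.
    intros n Hn. rewrite Cnorm_minus. apply (HN n Hn).
Qed.

Lemma Ris_eps (t : nat -> R) l :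
  is_series t l <-> forall eps, 0 < eps -> exists N, forall n, (N <= n)%nat ->
    Rabs (sum_n t n - l) < eps.
Proof.
  rewrite series_eps. split.
  - intros H eps He. destruct (H (mkposreal eps He)) as [N HN]. exists N.
    intros n Hn. apply (HN n Hn).
  - intros H eps. destruct (H eps (cond_pos eps)) as [N HN]. exists N.
    intros n Hn. apply (HN n Hn).
Qed.

Lemma Cis_unique (t : nat -> C) (l1 l2 : C) : Cis t l1 -> Cis t l2 -> l1 = l2.
Proof.
  intros H1 H2. cut ((l1 - l2)%C = RtoC 0).
  { intros Hz. replace l1 with ((l1 - l2) + l2)%C by ring. rewrite Hz. ring. }
  apply Cmod_eq_0.
  destruct (Rle_lt_dec (Cmod (l1 - l2)) 0) as [H|H].
  - pose proof (Cmod_ge_0 (l1 - l2)). lra.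
  - exfalso. set (e := Cmod (l1 - l2)).
    rewrite Cis_eps in H1, H2.
    destruct (H1 (e/2)) as [N1 HN1]; [unfold e; lra|].
    destruct (H2 (e/2)) as [N2 HN2]; [unfold e; lra|].
    specialize (HN1 (N1+N2)%nat ltac:(lia)). specialize (HN2 (N1+N2)%nat ltac:(lia)).
    assert (Heq : (l1 - l2 = (sum_n t (N1+N2) - l2) - (sum_n t (N1+N2) - l1))%C) by ring.
    pose proof (Cmod_triangle (sum_n t (N1+N2) - l2) (- (sum_n t (N1+N2) - l1))).
    rewrite Cmod_opp in H0. fold e in HN1, HN2.
    assert (Cmod (l1 - l2) < e). { rewrite Heq. unfold Cminus at 1. lra. }
    unfold e in H3. lra.
Qed.

Lemma sum_n_Cmod (t : nat -> C) n : Cmod (sum_n t n) <= sum_n (fun k => Cmod (t k)) n.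
Proof.
  induction n.
  - rewrite !sum_O. lra.
  - rewrite !sum_Sn. eapply Rle_trans. apply Cmod_triangle. simpl. unfold plus; simpl. lra.
Qed.

Lemma Cis_norm_le (t : nat -> C) (l : C) B :
  Cis t l -> (forall n, sum_n (fun k => Cmod (t k)) n <= B) -> Cmod l <= B.
Proof.
  intros H HB. destruct (Rle_lt_dec (Cmod l) B) as [|Hlt]; auto. exfalso.
  rewrite Cis_eps in H. destruct (H (Cmod l - B)) as [N HN]; [lra|].
  specialize (HN N (le_n _)). pose proof (sum_n_Cmod t N). specialize (HB N).
  assert (Cmod l <= Cmod (sum_n t N) + Cmod (sum_n t N - l)).
  { replace l with (sum_n t N + (-(sum_n t N - l)))%C at 1 by ring.
    eapply Rle_trans. apply Cmod_triangle. rewrite Cmod_opp. lra. }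
  lra.
Qed.

Lemma Cis_bounded (t : nat -> C) (l : C) : Cis t l -> exists M, forall n, Cmod (t n) <= M.
Proof.
  intros H. destruct (filterlim_bounded (K:=C_AbsRing) (V:=C_NormedModule) (sum_n t)) as [M HM].
  { exists l. exact H. }
  exists (2 * M). intros n. pose proof (HM n) as H0. change (Cmod (sum_n t n) <= M) in H0.
  assert (0 <= M). { eapply Rle_trans; [apply Cmod_ge_0|]. apply H0. }
  destruct n.
  - rewrite sum_O in H0. lra.
  - pose proof (HM (S n)) as H2. change (Cmod (sum_n t (S n)) <= M) in H2. rewrite sum_Sn in H2.
    pose proof (HM n) as H3. change (Cmod (sum_n t n) <= M) in H3.
    assert (Heq : t (S n) = (plus (sum_n t n) (t (S n)) - sum_n t n)%C).
    { change (plus (sum_n t n) (t (S n))) with (sum_n t n + t (S n))%C. ring. }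
    rewrite Heq. eapply Rle_trans. apply Cmod_triangle. rewrite Cmod_opp. lra.
Qed.

(* finite sums indexed j < n *)
Fixpoint csum (f : nat -> C) (n : nat) : C :=
  match n with O => RtoC 0 | S n => (csum f n + f n)%C end.
Fixpoint rsum (f : nat -> R) (n : nat) : R :=
  match n with O => 0 | S n => rsum f n + f n end.

Lemma Cis_zero : Cis (fun _ => RtoC 0) (RtoC 0).
Proof.
  rewrite Cis_eps. intros eps He. exists O. intros n _.
  assert (sum_n (fun _ : nat => RtoC 0) n = RtoC 0).
  { induction n. now rewrite sum_O. rewrite sum_Sn, IHn. change (0+0 = 0)%C. ring. }
  rewrite H. replace (0 - 0)%C with (RtoC 0) by ring. rewrite Cmod_0. lra.
Qed.

Lemma Cis_plus (a b : nat -> C) la lb : Cis a la -> Cis b lb ->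
  Cis (fun n => a n + b n)%C (la + lb)%C.
Proof. intros. apply (is_series_plus a b la lb); auto. Qed.

Lemma Cis_scal (c : C) (a : nat -> C) l : Cis a l -> Cis (fun n => c * a n)%C (c * l)%C.
Proof. intros. apply (is_series_scal c a l); auto. Qed.

Lemma Cis_ext (a b : nat -> C) l : (forall n, a n = b n) -> Cis a l -> Cis b l.
Proof. intros. eapply is_series_ext; eauto. Qed.

Lemma Cis_csum (F : nat -> nat -> C) (L : nat -> C) N :
  (forall j, (j < N)%nat -> Cis (F j) (L j)) ->
  Cis (fun m => csum (fun j => F j m) N) (csum L N).
Proof.
  induction N; intros H; simpl.
  - apply Cis_zero.
  - apply Cis_plus. apply IHN. intros; apply H; lia. apply H; lia.
Qed.

Lemma csum_Cmod (f : nat -> C) n : Cmod (csum f n) <= rsum (fun j => Cmod (f j)) n.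
Proof.
  induction n; simpl. rewrite Cmod_0; lra.
  eapply Rle_trans. apply Cmod_triangle. lra.
Qed.

Lemma csum_ext (f g : nat -> C) n : (forall j, (j < n)%nat -> f j = g j) -> csum f n = csum g n.
Proof. induction n; simpl; intros; auto. rewrite IHn, H; auto. Qed.

Lemma rsum_ext (f g : nat -> R) n : (forall j, (j < n)%nat -> f j = g j) -> rsum f n = rsum g n.
Proof. induction n; simpl; intros; auto. rewrite IHn, H; auto. Qed.

Lemma rsum_le (f g : nat -> R) n : (forall j, (j < n)%nat -> f j <= g j) -> rsum f n <= rsum g n.
Proof. induction n; simpl; intros; try lra. pose proof (H n (le_n _)). pose proof (IHn ltac:(intros; apply H; lia)). lra. Qed.

Lemma csum_plus (f g : nat -> C) n : csum (fun j => f j + g j)%C n = (csum f n + csum g n)%C.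
Proof. induction n; simpl. ring. rewrite IHn. ring. Qed.

Lemma csum_scal (c : C) (f : nat -> C) n : csum (fun j => c * f j)%C n = (c * csum f n)%C.
Proof. induction n; simpl. ring. rewrite IHn. ring. Qed.

Lemma csum_swap (F : nat -> nat -> C) n m :
  csum (fun j => csum (fun k => F j k) m) n = csum (fun k => csum (fun j => F j k) n) m.
Proof.
  induction n; simpl.
  - induction m; simpl; auto. rewrite <- IHm. ring.
  - rewrite IHn. rewrite <- csum_plus. reflexivity.
Qed.

Lemma rsum_const c n : rsum (fun _ => c) n = INR n * c.
Proof. induction n; simpl rsum. simpl; ring. rewrite IHn, S_INR. ring. Qed.

Lemma RtoC_csum (f : nat -> R) n : RtoC (rsum f n) = csum (fun j => RtoC (f j)) n.
Proof. induction n; simpl; auto. rewrite <- IHn. rewrite RtoC_plus. auto. Qed.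

Lemma Ris_partial_le (b : nat -> R) B : is_series b B -> (forall n, 0 <= b n) ->
  forall n, sum_n b n <= B.
Proof.
  intros H Hb n0. destruct (Rle_lt_dec (sum_n b n0) B) as [|Hlt]; auto. exfalso.
  rewrite Ris_eps in H. destruct (H (sum_n b n0 - B)) as [N HN]; [lra|].
  assert (Hmono : forall k, sum_n b n0 <= sum_n b (n0 + k)).
  { induction k. rewrite Nat.add_0_r. lra. rewrite Nat.add_succ_r, sum_Sn. 
    pose proof (Hb (S (n0 + k))). unfold plus; simpl. lra. }
  specialize (HN (N + n0)%nat ltac:(lia)). specialize (Hmono N).
  rewrite Nat.add_comm in Hmono. apply Rabs_lt_between in HN. lra.
Qed.

Lemma CV_ge1 (a : nat -> R) :
  (forall r, 0 <= r < 1 -> exists M, forall n, Rabs (a n * r ^ n) <= M) ->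
  forall x, Rabs x < 1 -> Rbar_lt (Rabs x) (CV_radius a).
Proof.
  intros H x Hx. pose proof (Rabs_pos x).
  set (r := (Rabs x + 1) / 2).
  destruct (CV_radius_bounded a) as [Hub _].
  assert (Rbar_le r (CV_radius a)). { apply Hub. apply H. unfold r; lra. }
  destruct (CV_radius a) as [c| |]; simpl in *; auto; unfold r in *; lra.
Qed.

Lemma ex_series_poly (q : R) : 0 <= q < 1 ->
  ex_series (fun n => INR (S n) * INR (S (S n)) * q ^ n).
Proof.
  intros Hq. set (one := fun _ : nat => 1).
  assert (Hcv : Rbar_lt (Rabs q) (CV_radius one)).
  { apply CV_ge1. intros r Hr. exists 1. intros n. unfold one.
    rewrite Rmult_1_l, Rabs_pos_eq. rewrite <- (pow1 n). apply pow_incrst_1 || idtac.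
    apply pow_incr; lra. apply pow_le; lra. rewrite Rabs_pos_eq; lra. }
  rewrite <- CV_radius_derive in Hcv.
  apply ex_pseries_derive in Hcv.
  destruct Hcv as [l Hl]. exists l. unfold is_pseries in Hl.
  eapply is_series_ext; [|apply Hl]. intros n. unfold PS_derive, one.
  change (pow_n q n * (INR (S n) * (INR (S (S n)) * 1)) = INR (S n) * INR (S (S n)) * q ^ n).
  rewrite pow_n_pow. ring.
Qed.

Lemma ex_series_n2 (q : R) : 0 <= q < 1 -> ex_series (fun n => INR n ^ 2 * q ^ n).
Proof.
  intros Hq. eapply (ex_series_le (K:=R_AbsRing) (V:=R_CompleteNormedModule)); [|apply (ex_series_poly q Hq)].
  intros n. change (norm ?x) with (Rabs x). rewrite Rabs_pos_eq.
  2: { apply Rmult_le_pos. apply pow_le, pos_INR. apply pow_le; lra. }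
  apply Rmult_le_compat_r. apply pow_le; lra. rewrite !S_INR. pose proof (pos_INR n). nra.
Qed.

Lemma ex_series_n1 (q : R) : 0 <= q < 1 -> ex_series (fun n => INR (S n) * q ^ n).
Proof.
  intros Hq. eapply (ex_series_le (K:=R_AbsRing) (V:=R_CompleteNormedModule)); [|apply (ex_series_poly q Hq)].
  intros n. change (norm ?x) with (Rabs x). rewrite Rabs_pos_eq.
  2: { apply Rmult_le_pos. apply pos_INR. apply pow_le; lra. }
  apply Rmult_le_compat_r. apply pow_le; lra. rewrite !S_INR. pose proof (pos_INR n). nra.
Qed.

Lemma lim_nqn (q : R) : 0 <= q < 1 -> is_lim_seq (fun n => INR n * q ^ n) 0.
Proof.
  intros Hq. apply ex_series_lim_0. eapply (ex_series_le (K:=R_AbsRing) (V:=R_CompleteNormedModule)); [|apply (ex_series_n1 q Hq)].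
  intros n. change (norm ?x) with (Rabs x). rewrite Rabs_pos_eq.
  2: { apply Rmult_le_pos. apply pos_INR. apply pow_le; lra. }
  apply Rmult_le_compat_r. apply pow_le; lra. rewrite S_INR; lra.
Qed.

Lemma Rdiv_pow x y n : y <> 0 -> (x / y) ^ n = x ^ n / y ^ n.
Proof. intros Hy. induction n; simpl. field. rewrite IHn. field. split; auto. apply pow_nonzero; auto. Qed.

Lemma Cmod_RtoC_pos (x : R) : 0 <= x -> Cmod (RtoC x) = x.
Proof. intros. rewrite Cmod_R, Rabs_pos_eq; auto. Qed.

Lemma ps_bound (a : nat -> C) h : series_on_disk a h -> forall R', 0 <= R' < 1 ->
  exists M, 0 <= M /\ forall n, Cmod (a n) * R' ^ n <= M.
Proof.
  intros Hs R' HR. assert (Cmod (RtoC R') < 1) by (rewrite Cmod_RtoC_pos; lra).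
  specialize (Hs _ H). apply is_pseries_C in Hs. apply Cis_bounded in Hs as [M HM].
  exists M. split. eapply Rle_trans; [apply Cmod_ge_0|apply (HM O)].
  intros n. specialize (HM n). rewrite Cmod_mult, Cmod_pow, Cmod_RtoC_pos in HM; lra.
Qed.

Lemma Cis_shift (t : nat -> C) (l : C) : Cis (fun n => t (S n)) l -> t O = RtoC 0 -> Cis t l.
Proof.
  intros H H0. apply (is_series_decr_1 (K:=C_AbsRing) (V:=C_NormedModule)).
  rewrite H0. change (plus l (opp (RtoC 0))) with (l + - RtoC 0)%C.
  replace (l + - RtoC 0)%C with l by ring. exact H.
Qed.

Definition En (w z : C) (n : nat) : C :=
  (Cpow w n - Cpow z n - INR n * Cpow z (n - 1) * (w - z))%C.

Lemma En_bound (w z : C) R : 0 < R -> Cmod w <= R -> Cmod z <= R ->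
  forall n, R ^ 2 * Cmod (En w z n) <= INR n ^ 2 * R ^ n * Cmod (w - z) ^ 2.
Proof.
  intros HR Hw Hz n. set (d := Cmod (w - z)). assert (Hd : 0 <= d) by apply Cmod_ge_0.
  induction n.
  - unfold En. simpl. replace (1 - 1 - 0 * 1 * (w - z))%C with (RtoC 0) by ring.
    rewrite Cmod_0. lra.
  - assert (Hrec : En w z (S n) = (w * En w z n + INR n * Cpow z (n - 1) * (w - z) * (w - z))%C).
    { unfold En. destruct n.
      - simpl. ring.
      - replace (S (S n) - 1)%nat with (S n) by lia. replace (S n - 1)%nat with n by lia.
        rewrite !S_INR. simpl. rewrite RtoC_plus. ring. }
    rewrite Hrec.
    assert (Cmod (w * En w z n + INR n * Cpow z (n - 1) * (w - z) * (w - z)) <=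
            R * Cmod (En w z n) + INR n * R ^ (n - 1) * d ^ 2).
    { eapply Rle_trans. apply Cmod_triangle. rewrite !Cmod_mult, Cmod_pow.
      rewrite Cmod_RtoC_pos by apply pos_INR. fold d.
      apply Rplus_le_compat. apply Rmult_le_compat_r. apply Cmod_ge_0. auto.
      replace (d ^ 2) with (d * d) by ring. rewrite <- !Rmult_assoc.
      apply Rmult_le_compat_r; auto. apply Rmult_le_compat_r; auto.
      apply Rmult_le_compat_l. apply pos_INR. apply pow_incr. split; auto. apply Cmod_ge_0. }
    assert (HRn : R ^ 2 * (INR n * R ^ (n - 1)) <= INR n * R ^ S n).
    { destruct n. simpl. lra. replace (S n - 1)%nat with n by lia. simpl. lra. }
    pose proof (pos_INR n). pose proof (pow_le R n (Rlt_le _ _ HR)).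
    rewrite S_INR. 
    apply Rle_trans with (R ^ 2 * (R * Cmod (En w z n) + INR n * R ^ (n - 1) * d ^ 2)).
    apply Rmult_le_compat_l. apply pow_le; lra. auto.
    replace (R ^ 2 * (R * Cmod (En w z n) + INR n * R ^ (n - 1) * d ^ 2)) with
      (R * (R ^ 2 * Cmod (En w z n)) + (R ^ 2 * (INR n * R ^ (n - 1))) * d ^ 2) by ring.
    apply Rle_trans with (R * (INR n ^ 2 * R ^ n * d ^ 2) + (INR n * R ^ S n) * d ^ 2).
    apply Rplus_le_compat. apply Rmult_le_compat_l; lra.
    apply Rmult_le_compat_r. apply pow_le; auto. auto.
    assert (E : R * (INR n ^ 2 * R ^ n * d ^ 2) + INR n * R ^ S n * d ^ 2 =
      (INR n ^ 2 + INR n) * (R ^ S n * d ^ 2)) by (simpl; ring).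
    rewrite E. replace ((INR n + 1) ^ 2 * R ^ S n * d ^ 2) with ((INR n + 1) ^ 2 * (R ^ S n * d ^ 2)) by ring.
    apply Rmult_le_compat_r. apply Rmult_le_pos. apply pow_le; lra. apply pow_le; lra. nra.
Qed.

Lemma Cmod_pos_lt_1_pow_le (z : C) R n : Cmod z <= R -> Cmod (Cpow z n) <= R ^ n.
Proof. intros. rewrite Cmod_pow. apply pow_incr. split; auto. apply Cmod_ge_0. Qed.

Lemma ps_deriv (a : nat -> C) h : series_on_disk a h -> forall z, Cmod z < 1 ->
  exists l : C, Cis (fun n => INR (S n) * a (S n) * Cpow z n)%C l /\ is_derive h z l.
Proof.
  intros Hs z Hz. set (r := Cmod z). pose proof (Cmod_ge_0 z) as Hr0. fold r in Hr0, Hz.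
  set (R := (r + 1) / 2). set (R' := (R + 1) / 2).
  destruct (ps_bound a h Hs R') as [M [HM0 HM]]. unfold R', R; lra.
  assert (HR'pos : 0 < R') by (unfold R', R; lra).
  assert (HRpos : 0 < R) by (unfold R; lra).
  assert (Ha : forall n, Cmod (a n) <= M / R' ^ n).
  { intros n. specialize (HM n). pose proof (pow_lt R' n HR'pos).
    apply (Rmult_le_reg_r (R' ^ n)); auto. unfold Rdiv. rewrite Rmult_assoc, Rinv_l; lra. }
  set (q := R / R'). assert (Hq : 0 <= q < 1).
  { unfold q. split. apply Rdiv_le_0_compat; lra. apply Rmult_lt_reg_r with R'; auto.
    unfold Rdiv. rewrite Rmult_assoc, Rinv_l; unfold R', R in *; lra. }
  assert (Hqn : forall n, q ^ n = R ^ n / R' ^ n) by (intros; unfold q; apply Rdiv_pow; lra).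
  assert (Hex : ex_series (K:=C_AbsRing) (V:=C_CompleteNormedModule)
                 (fun n => INR (S n) * a (S n) * Cpow z n)%C).
  { apply (ex_series_le (K:=C_AbsRing) (V:=C_CompleteNormedModule)) with
      (b := fun n => M / R' * (INR (S n) * q ^ n)).
    - intros n. change (Cmod (INR (S n) * a (S n) * Cpow z n)%C <= M / R' * (INR (S n) * q ^ n)).
      rewrite !Cmod_mult, Cmod_pow, Cmod_RtoC_pos by apply pos_INR. fold r.
      pose proof (pos_INR (S n)). pose proof (pow_lt R' n HR'pos).
      apply Rle_trans with (INR (S n) * (M / R' ^ S n) * R ^ n).
      + apply Rmult_le_compat. apply Rmult_le_pos; auto. apply Cmod_ge_0. apply pow_le; lra.
        apply Rmult_le_compat_l; auto. apply pow_incr; unfold R; lra.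
      + rewrite Hqn. simpl. right. field. lra.
    - apply (ex_series_scal_l (K:=R_AbsRing) (V:=R_NormedModule)). apply ex_series_n1; auto. }
  destruct Hex as [l Hl]. exists l. split. exact Hl.
  destruct (ex_series_n2 q Hq) as [S2 HS2].
  assert (HS2pos : 0 <= S2).
  { eapply Rle_trans; [|apply (Ris_partial_le _ _ HS2) with (n := O)].
    rewrite sum_O. simpl. lra. intros. apply Rmult_le_pos. apply pow_le, pos_INR. apply pow_le; lra. }
  set (K := M / R ^ 2 * S2).
  assert (HK : 0 <= K). { unfold K. apply Rmult_le_pos; auto. apply Rdiv_le_0_compat; auto. apply pow_lt; lra. }
  assert (Key : forall w, Cmod (w - z) < R - r ->
            Cmod (h w - h z - (w - z) * l)%C <= K * Cmod (w - z) ^ 2).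
  { intros w Hwz. set (d := Cmod (w - z)). pose proof (Cmod_ge_0 (w - z)) as Hd. fold d in Hd, Hwz.
    assert (Hw : Cmod w <= R).
    { replace w with (z + (w - z))%C by ring. eapply Rle_trans. apply Cmod_triangle. fold r d. lra. }
    assert (Hhw : Cis (fun n => a n * Cpow w n)%C (h w)).
    { apply is_pseries_C. apply Hs. unfold R in Hw; lra. }
    assert (Hhz : Cis (fun n => a n * Cpow z n)%C (h z)).
    { apply is_pseries_C. apply Hs. auto. }
    assert (Hl' : Cis (fun n => INR n * a n * Cpow z (n - 1))%C l).
    { apply Cis_shift. eapply Cis_ext; [|exact Hl]. intros n. simpl. rewrite Nat.sub_0_r. reflexivity.
      simpl. ring. }
    assert (Hc := Cis_plus _ _ _ _ (Cis_plus _ _ _ _ Hhw (Cis_scal (-1) _ _ Hhz)) (Cis_scal (- (w - z)) _ _ Hl')).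
    assert (Hc' : Cis (fun n => a n * En w z n)%C (h w - h z - (w - z) * l)%C).
    { eapply Cis_ext; [|replace (h w - h z - (w - z) * l)%C with (h w + -1 * h z + - (w - z) * l)%C by ring; exact Hc].
      intros n. unfold En. simpl. ring. }
    apply (Cis_norm_le _ _ _ Hc'). intros n.
    apply Rle_trans with (sum_n (fun k => M / R ^ 2 * d ^ 2 * (INR k ^ 2 * q ^ k)) n).
    - apply sum_n_m_le. intros k. rewrite Cmod_mult.
      pose proof (En_bound w z R HRpos Hw (ltac:(unfold R; fold r; lra)) k) as HE. fold d in HE.
      pose proof (pow_lt R' k HR'pos). pose proof (pow_lt R k HRpos).
      assert (HE' : Cmod (En w z k) <= INR k ^ 2 * R ^ k * d ^ 2 / R ^ 2).
      { apply Rmult_le_reg_l with (R ^ 2). apply pow_lt; lra.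
        replace (R ^ 2 * (INR k ^ 2 * R ^ k * d ^ 2 / R ^ 2)) with (INR k ^ 2 * R ^ k * d ^ 2). auto.
        field. lra. }
      apply Rle_trans with ((M / R' ^ k) * (INR k ^ 2 * R ^ k * d ^ 2 / R ^ 2)).
      apply Rmult_le_compat; auto; apply Cmod_ge_0.
      rewrite Hqn. right. field. split; lra.
    - apply Ris_partial_le.
      + replace (K * d ^ 2) with (M / R ^ 2 * d ^ 2 * S2) by (unfold K; ring).
        apply (is_series_scal_l (K:=R_AbsRing) (V:=R_NormedModule)). auto.
      + intros k. apply Rmult_le_pos. apply Rmult_le_pos. apply Rdiv_le_0_compat; auto.
        apply pow_lt; lra. apply pow_le; auto. apply Rmult_le_pos. apply pow_le, pos_INR. apply pow_le; lra. }
  unfold is_derive, filterdiff. split. apply is_linear_scal_l.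
  intros x Hx. apply (is_filter_lim_locally_unique (K:=C_AbsRing) (V:=AbsRing_NormedModule C_AbsRing)) in Hx. subst x.
  intros eps. set (del := Rmin (R - r) (eps / (K + 1))).
  assert (Hdel : 0 < del). { unfold del. apply Rmin_pos. unfold R; lra. apply Rdiv_lt_0_compat. apply cond_pos. lra. }
  assert (Hs2 : 0 < sqrt 2) by (apply sqrt_lt_R0; lra).
  exists (mkposreal (del / sqrt 2) (Rdiv_lt_0_compat _ _ Hdel Hs2)). intros y Hy.
  change (Cmod (y - z)%C < del / sqrt 2) in Hy.
  assert (Hy' : Cmod (y - z)%C < del).
  { eapply Rlt_le_trans. exact Hy. apply Rmult_le_reg_r with (sqrt 2); auto.
    replace (del / sqrt 2 * sqrt 2) with del by (field; lra).
    assert (1 <= sqrt 2). { rewrite <- sqrt_1. apply sqrt_le_1_alt. lra. } nra. }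
  clear Hy. rename Hy' into Hy.
  change (Cmod (h y - h z - (y - z) * l)%C <= eps * Cmod (y - z)%C).
  assert (Hyz1 : Cmod (y - z) < R - r) by (eapply Rlt_le_trans; [exact Hy| apply Rmin_l]).
  assert (Hyz2 : Cmod (y - z) <= eps / (K + 1)) by (left; eapply Rlt_le_trans; [exact Hy| apply Rmin_r]).
  eapply Rle_trans. apply (Key y Hyz1).
  pose proof (Cmod_ge_0 (y - z)). pose proof (cond_pos eps).
  assert (K * Cmod (y - z) <= eps).
  { apply Rle_trans with (K * (eps / (K + 1))). apply Rmult_le_compat_l; auto.
    apply Rmult_le_reg_r with (K + 1). lra. replace (K * (eps / (K + 1)) * (K + 1)) with (K * eps) by (field; lra). nra. }
  simpl. nra.
Qed.

Lemma cis_mult a b : ((cos a, sin a) * (cos b, sin b))%C = (cos (a + b), sin (a + b)).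
Proof. unfold Cmult; simpl. rewrite cos_plus, sin_plus. f_equal; ring. Qed.

Lemma cis_pow t n : Cpow (cos t, sin t) n = (cos (INR n * t), sin (INR n * t)).
Proof.
  induction n.
  - simpl. rewrite Rmult_0_l, cos_0, sin_0. reflexivity.
  - rewrite Cpow_S, IHn, cis_mult. rewrite S_INR. f_equal; f_equal; ring.
Qed.

Definition om (N : nat) : C := (cos (2 * PI / INR N), sin (2 * PI / INR N)).

Lemma om_pow N n : Cpow (om N) n = (cos (2 * PI * INR n / INR N), sin (2 * PI * INR n / INR N)).
Proof. unfold om. rewrite cis_pow. f_equal; f_equal; unfold Rdiv; ring. Qed.

Lemma om_N N : (0 < N)%nat -> Cpow (om N) N = RtoC 1.
Proof.
  intros HN. rewrite om_pow. assert (0 < INR N) by (apply lt_0_INR; auto).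
  replace (2 * PI * INR N / INR N) with (2 * PI) by (field; lra).
  rewrite cos_2PI, sin_2PI. reflexivity.
Qed.

Lemma Cmod_cis t : Cmod (cos t, sin t) = 1.
Proof.
  unfold Cmod; simpl. pose proof (sin2_cos2 t). unfold Rsqr in H. replace (cos t * (cos t * 1) + sin t * (sin t * 1)) with 1 by lra. apply sqrt_1.
Qed.

Lemma Cmod_om N : Cmod (om N) = 1.
Proof. apply Cmod_cis. Qed.

Lemma om_conj N : (om N * Cconj (om N))%C = RtoC 1.
Proof.
  rewrite <- Cmod2_conj, Cmod_om. simpl. f_equal; ring.
Qed.

Lemma om_mod N e : (0 < N)%nat -> Cpow (om N) e = Cpow (om N) (e mod N).
Proof.
  intros HN. rewrite (Nat.div_mod e N) at 1 by lia.
  rewrite Cpow_add_r, Cpow_mult_r, om_N, Cpow_1_l by auto. ring.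
Qed.

Lemma om_ne1 N e : (0 < e < N)%nat -> Cpow (om N) e <> RtoC 1.
Proof.
  intros He Heq. rewrite om_pow in Heq. injection Heq as Hc Hs.
  set (x := 2 * PI * INR e / INR N) in *.
  assert (Hx : 0 < x / 2 < PI).
  { assert (0 < INR e) by (apply lt_0_INR; lia). assert (INR e < INR N) by (apply lt_INR; lia).
    pose proof PI_RGT_0. unfold x. split.
    - apply Rdiv_lt_0_compat; [|lra]. apply Rdiv_lt_0_compat; nra.
    - apply Rmult_lt_reg_r with (2 * INR N). nra. field_simplify; try lra. nra. }
  pose proof (sin_gt_0 _ (proj1 Hx) (proj2 Hx)).
  replace x with (2 * (x / 2)) in Hc by field. rewrite cos_2a_sin in Hc. nra.
Qed.

Lemma geom_csum (y : C) N : (csum (fun j => Cpow y j) N * (1 - y))%C = (1 - Cpow y N)%C.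
Proof. induction N; simpl. ring. rewrite Cmult_plus_distr_r, IHN. ring. Qed.

Lemma geom_csum0 (y : C) N : y <> RtoC 1 -> Cpow y N = RtoC 1 -> csum (fun j => Cpow y j) N = RtoC 0.
Proof.
  intros H1 H2. pose proof (geom_csum y N). rewrite H2 in H.
  replace (1 - 1)%C with (RtoC 0) in H by ring.
  assert (Hnz : (1 - y)%C <> RtoC 0). { intros E. apply H1. replace y with (1 - (1 - y))%C by ring. rewrite E. ring. }
  transitivity (csum (fun j => Cpow y j) N * (1 - y) / (1 - y))%C. field; auto.
  rewrite H. field. auto.
Qed.

Lemma csum_const (c : C) N : csum (fun _ => c) N = (INR N * c)%C.
Proof. induction N; simpl csum. simpl. ring. rewrite IHN, S_INR, RtoC_plus. ring. Qed.

Lemma orth N e : (0 < N)%nat ->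
  csum (fun j => Cpow (Cpow (om N) e) j) N = if (e mod N =? 0)%nat then RtoC (INR N) else RtoC 0.
Proof.
  intros HN. destruct (Nat.eqb_spec (e mod N) 0) as [E|E].
  - rewrite om_mod, E by auto. simpl Cpow. rewrite (csum_ext _ (fun _ => RtoC 1)).
    rewrite csum_const. apply Cmult_1_r. intros. apply Cpow_1_l.
  - apply geom_csum0.
    + rewrite om_mod by auto. apply om_ne1. pose proof (Nat.mod_upper_bound e N). lia.
    + rewrite <- Cpow_mult_r, Nat.mul_comm, Cpow_mult_r, om_N, Cpow_1_l; auto.
Qed.

Lemma csum_conj (f : nat -> C) N : Cconj (csum f N) = csum (fun j => Cconj (f j)) N.
Proof.
  induction N; simpl. unfold Cconj, RtoC; simpl. rewrite Ropp_0. reflexivity. rewrite Cplus_conj, IHN. auto.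
Qed.

Lemma mod_small_eq0 e N : (0 < N)%nat -> (e < N)%nat -> (e mod N =? 0)%nat = (e =? 0)%nat.
Proof. intros. rewrite Nat.mod_small; auto. Qed.

Lemma orth2 N m k : (m < N)%nat -> (k < N)%nat ->
  csum (fun j => Cpow (Cpow (om N) m * Cpow (Cconj (om N)) k) j) N =
  if (m =? k)%nat then RtoC (INR N) else RtoC 0.
Proof.
  intros Hm Hk. assert (HN : (0 < N)%nat) by lia.
  destruct (Compare_dec.le_lt_dec k m) as [Hkm|Hmk].
  - assert (E : (Cpow (om N) m * Cpow (Cconj (om N)) k)%C = Cpow (om N) (m - k)).
    { assert (Hk' : (Cpow (om N) k * Cpow (Cconj (om N)) k)%C = RtoC 1)
        by (rewrite <- Cpow_mult_l, om_conj, Cpow_1_l; auto).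
      replace m with ((m - k) + k)%nat at 1 by lia. rewrite Cpow_add_r, <- Cmult_assoc, Hk'. ring. }
    rewrite (csum_ext _ (fun j => Cpow (Cpow (om N) (m - k)) j)) by (intros; rewrite E; auto).
    rewrite orth, mod_small_eq0 by lia.
    destruct (Nat.eqb_spec (m - k) 0); destruct (Nat.eqb_spec m k); auto; lia.
  - assert (E : (Cpow (om N) m * Cpow (Cconj (om N)) k)%C = Cconj (Cpow (om N) (k - m))).
    { assert (Hm' : (Cpow (om N) m * Cpow (Cconj (om N)) m)%C = RtoC 1)
        by (rewrite <- Cpow_mult_l, om_conj, Cpow_1_l; auto).
      rewrite Cpow_conj. replace k with (m + (k - m))%nat at 1 by lia. rewrite Cpow_add_r, Cmult_assoc, Hm'. ring. }
    rewrite (csum_ext _ (fun j => Cconj (Cpow (Cpow (om N) (k - m)) j))).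
    + rewrite <- csum_conj, orth, mod_small_eq0 by lia.
      destruct (Nat.eqb_spec (k - m) 0); destruct (Nat.eqb_spec m k); try lia.
      unfold Cconj, RtoC; simpl. rewrite Ropp_0. reflexivity.
    + intros. rewrite E, !Cpow_conj. auto.
Qed.

Lemma orth3 N m k : (m < N)%nat -> (k < N)%nat ->
  csum (fun j => Cpow (Cpow (Cconj (om N)) m * Cpow (Cconj (om N)) k) j) N =
  if ((m + k) mod N =? 0)%nat then RtoC (INR N) else RtoC 0.
Proof.
  intros Hm Hk. assert (HN : (0 < N)%nat) by lia.
  rewrite (csum_ext _ (fun j => Cconj (Cpow (Cpow (om N) (m + k)) j))).
  2:{ intros. rewrite !Cpow_conj, Cpow_add_r. auto. }
  rewrite <- csum_conj, orth by auto. destruct (_ =? _)%nat; unfold Cconj, RtoC; simpl; rewrite Ropp_0; reflexivity.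
Qed.

Lemma powswap (a : C) j m : Cpow (Cpow a j) m = Cpow (Cpow a m) j.
Proof. rewrite <- !Cpow_mult_r, Nat.mul_comm. auto. Qed.

Lemma Cmod_1_minus (y : C) : 1 - Cmod y <= Cmod (1 - y).
Proof.
  pose proof (Cmod_triangle (1 - y) y). replace (1 - y + y)%C with (RtoC 1) in H by ring.
  rewrite Cmod_1 in H. lra.
Qed.

Lemma Cmod_minus_1 (y : C) : 1 - Cmod y <= Cmod (y - 1).
Proof.
  replace (y - 1)%C with (- (1 - y))%C by ring. rewrite Cmod_opp. apply Cmod_1_minus.
Qed.

Lemma C_neq0_of_Cmod (y : C) : 0 < Cmod y -> y <> RtoC 0.
Proof. intros H E. rewrite E, Cmod_0 in H. lra. Qed.

Lemma csum_zero (f : nat -> C) N : (forall k, (k < N)%nat -> f k = RtoC 0) -> csum f N = RtoC 0.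
Proof. induction N; simpl; intros; auto. rewrite IHN. rewrite H by lia. ring. intros; apply H; lia. Qed.

Lemma csum_single (f : nat -> C) (P : nat -> bool) (c : C) N k0 :
  (k0 < N)%nat -> (forall k, (k < N)%nat -> (P k = true <-> k = k0)) ->
  csum (fun k => f k * if P k then c else RtoC 0)%C N = (f k0 * c)%C.
Proof.
  induction N; intros Hk0 HP. lia. simpl.
  destruct (Nat.eq_dec k0 N) as [E|E].
  - subst k0. rewrite csum_zero. 
    + destruct (HP N ltac:(lia)) as [_ H2]. rewrite H2; auto. ring.
    + intros k Hk. destruct (P k) eqn:Pk; [|ring]. apply HP in Pk; lia.
  - rewrite IHN by (try lia; intros; apply HP; lia).
    destruct (P N) eqn:PN; [apply HP in PN; lia|]. ring.
Qed.

Section Tau.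
Variable N : nat.
Hypothesis HN : (0 < N)%nat.
Variable x : C.
Hypothesis Hx : Cmod x < 1.

Let w := om N.
Let wb := Cconj (om N).

Definition Gk (j : nat) : C := (/ (1 - x * Cpow wb j))%C.

Lemma wb_N : Cpow wb N = RtoC 1.
Proof. unfold wb. rewrite <- Cpow_conj, om_N by auto. unfold Cconj, RtoC; simpl. rewrite Ropp_0; auto. Qed.

Lemma Cmod_wb_pow j : Cmod (Cpow wb j) = 1.
Proof. unfold wb. rewrite Cmod_pow, Cmod_conj, Cmod_om. apply pow1. Qed.

Lemma Cmod_w_pow j : Cmod (Cpow w j) = 1.
Proof. unfold w. rewrite Cmod_pow, Cmod_om. apply pow1. Qed.

Lemma D_nz : (1 - Cpow x N)%C <> RtoC 0.
Proof.
  apply C_neq0_of_Cmod. eapply Rlt_le_trans; [|apply Cmod_1_minus].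
  rewrite Cmod_pow. pose proof (Cmod_ge_0 x).
  assert (Cmod x ^ N < 1). { destruct N. lia. apply pow_lt_1_compat. lra. lia. } lra.
Qed.

Lemma y_nz j : (1 - x * Cpow wb j)%C <> RtoC 0.
Proof.
  apply C_neq0_of_Cmod. eapply Rlt_le_trans; [|apply Cmod_1_minus].
  rewrite Cmod_mult, Cmod_wb_pow. lra.
Qed.

Lemma Gk_bound j : Cmod (Gk j) <= / (1 - Cmod x).
Proof.
  unfold Gk. rewrite Cmod_inv by apply y_nz. apply Rinv_le_contravar. lra.
  eapply Rle_trans; [|apply Cmod_1_minus]. rewrite Cmod_mult, Cmod_wb_pow. lra.
Qed.

Lemma Gk_expand j : Gk j = (csum (fun k => Cpow x k * Cpow (Cpow wb j) k) N / (1 - Cpow x N))%C.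
Proof.
  pose proof (geom_csum (x * Cpow wb j) N) as H.
  rewrite Cpow_mult_l, powswap, wb_N, Cpow_1_l, Cmult_1_r in H.
  rewrite (csum_ext _ (fun k => Cpow (x * Cpow wb j) k)) by (intros; rewrite Cpow_mult_l; auto).
  unfold Gk. assert (HD := D_nz). rewrite <- H in HD |- *. field. split; auto. apply y_nz.
  intros E. apply HD. rewrite E. ring.
Qed.

Lemma tau1 m : (m < N)%nat ->
  (/ INR N * csum (fun j => Cpow (Cpow w j) m * Gk j) N)%C = (Cpow x m / (1 - Cpow x N))%C.
Proof.
  intros Hm. assert (HNr : INR N <> 0) by (apply not_0_INR; lia).
  rewrite (csum_ext _ (fun j => / (1 - Cpow x N) * csum (fun k => Cpow x k * Cpow (Cpow w m * Cpow wb k) j) N)%C).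
  2:{ intros j _. rewrite Gk_expand.
      assert (E : csum (fun k => Cpow x k * Cpow (Cpow w m * Cpow wb k) j)%C N =
                  (Cpow (Cpow w j) m * csum (fun k => Cpow x k * Cpow (Cpow wb j) k)%C N)%C).
      { rewrite <- csum_scal. apply csum_ext. intros k _.
        rewrite Cpow_mult_l, (powswap w j m), (powswap wb j k). ring. }
      rewrite E. unfold Cdiv. ring. }
  rewrite csum_scal, csum_swap.
  rewrite (csum_ext _ (fun k => Cpow x k * if (m =? k)%nat then RtoC (INR N) else RtoC 0)%C).
  2:{ intros k Hk. rewrite csum_scal. unfold w, wb. rewrite orth2 by auto. auto. }
  rewrite (csum_single _ _ _ _ m) by (auto; intros; rewrite Nat.eqb_eq; lia).
  field. split. apply D_nz. intros E. apply HNr. injection E; auto.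
Qed.

Lemma mod_0_2N e : (e < 2 * N)%nat -> ((e mod N =? 0)%nat = true <-> e = 0%nat \/ e = N).
Proof.
  intros He. rewrite Nat.eqb_eq. destruct (Compare_dec.lt_dec e N).
  - rewrite Nat.mod_small by auto. lia.
  - rewrite <- (Nat.mod_unique e N 1 (e - N)) by lia. lia.
Qed.

Lemma tau2 m : (m < N)%nat ->
  (/ INR N * csum (fun j => Cpow (Cpow wb j) m * Gk j) N)%C =
  (Cpow x (if (m =? 0)%nat then 0 else N - m) / (1 - Cpow x N))%C.
Proof.
  intros Hm. assert (HNr : INR N <> 0) by (apply not_0_INR; lia).
  rewrite (csum_ext _ (fun j => / (1 - Cpow x N) * csum (fun k => Cpow x k * Cpow (Cpow wb m * Cpow wb k) j) N)%C).
  2:{ intros j _. rewrite Gk_expand.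
      assert (E : csum (fun k => Cpow x k * Cpow (Cpow wb m * Cpow wb k) j)%C N =
                  (Cpow (Cpow wb j) m * csum (fun k => Cpow x k * Cpow (Cpow wb j) k)%C N)%C).
      { rewrite <- csum_scal. apply csum_ext. intros k _.
        rewrite Cpow_mult_l, (powswap wb j m), (powswap wb j k). ring. }
      rewrite E. unfold Cdiv. ring. }
  rewrite csum_scal, csum_swap.
  rewrite (csum_ext _ (fun k => Cpow x k * if ((m + k) mod N =? 0)%nat then RtoC (INR N) else RtoC 0)%C).
  2:{ intros k Hk. rewrite csum_scal. unfold wb. rewrite orth3 by auto. auto. }
  rewrite (csum_single _ _ _ _ (if (m =? 0)%nat then 0 else N - m)%nat).
  - field. split. apply D_nz. intros E. apply HNr. injection E; auto.
  - destruct (Nat.eqb_spec m 0); lia.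
  - intros k Hk. rewrite mod_0_2N by lia. destruct (Nat.eqb_spec m 0); lia.
Qed.

Lemma tau0 m : (m < N)%nat ->
  (/ INR N * csum (fun j => Cpow (Cpow w j) m) N)%C = if (m =? 0)%nat then RtoC 1 else RtoC 0.
Proof.
  intros Hm. assert (HNr : INR N <> 0) by (apply not_0_INR; lia).
  rewrite (csum_ext _ (fun j => Cpow (Cpow w m) j)) by (intros; apply powswap).
  unfold w. rewrite orth, mod_small_eq0 by auto. destruct (m =? 0)%nat.
  - field. intros E. apply HNr. injection E; auto.
  - ring.
Qed.

Lemma avg_bound (f : nat -> C) B : 0 <= B -> (forall j, (j < N)%nat -> Cmod (f j) <= B) ->
  Cmod (/ INR N * csum f N)%C <= B.
Proof.
  intros HB H. assert (HNr : 0 < INR N) by (apply lt_0_INR; lia).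
  rewrite Cmod_mult, Cmod_inv, Cmod_R, Rabs_pos_eq.
  - apply Rmult_le_reg_l with (INR N); auto. rewrite <- Rmult_assoc, Rinv_r, Rmult_1_l by lra.
    eapply Rle_trans. apply csum_Cmod. eapply Rle_trans. apply rsum_le. exact H.
    rewrite rsum_const. lra.
  - lra.
  - intros E. injection E. lra.
Qed.

End Tau.

Lemma sum_n_conj (t : nat -> C) n : sum_n (fun k => Cconj (t k)) n = Cconj (sum_n t n).
Proof.
  induction n. rewrite !sum_O; auto. rewrite !sum_Sn, IHn.
  change (Cconj (sum_n t n) + Cconj (t (S n)) = Cconj (sum_n t n + t (S n)))%C.
  rewrite Cplus_conj. auto.
Qed.

Lemma Cis_conj (t : nat -> C) (l : C) : Cis t l -> Cis (fun k => Cconj (t k)) (Cconj l).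
Proof.
  rewrite !Cis_eps. intros H eps He. destruct (H eps He) as [N HN]. exists N. intros n Hn.
  rewrite sum_n_conj, <- Cminus_conj, Cmod_conj. auto.
Qed.

Lemma Re_csum (f : nat -> C) N : Re (csum f N) = rsum (fun j => Re (f j)) N.
Proof. induction N; simpl; auto. rewrite <- IHN. auto. Qed.

Lemma Re_scal_real (a : R) (z : C) : Re (RtoC a * z) = a * Re z.
Proof. unfold Re, Cmult, RtoC; simpl. ring. Qed.

Lemma Re_plus' (z w : C) : Re (z + w) = Re z + Re w.
Proof. auto. Qed.

Lemma Re_le_Cmod (z : C) : Re z <= Cmod z.
Proof. pose proof (re_le_Cmod z). apply Rabs_le_between in H. lra. Qed.

Lemma Re_ge_negCmod (z : C) : - Cmod z <= Re z.
Proof. pose proof (re_le_Cmod z). apply Rabs_le_between in H. lra. Qed.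

Lemma Cmod_sq (y : C) : Cmod y ^ 2 = fst y ^ 2 + snd y ^ 2.
Proof. apply Cmod2_alt. Qed.

Lemma ReK_formula a b : (1-a)^2 + b^2 <> 0 ->
  Re ((1 + (a,b)) / (1 - (a,b)))%C = (1 - a^2 - b^2)/((1-a)^2 + b^2).
Proof. intros H. unfold Cdiv, Cinv, Cmult, Cplus, Cminus, Copp, Re, RtoC; simpl.
field. simpl in H. lra. Qed.

Lemma ReK_bound (y : C) s : Cmod y = s -> s < 1 ->
  (1 - s) / (1 + s) <= Re ((1 + y) / (1 - y)) /\ Cmod ((1 + y) / (1 - y)) <= (1 + s) / (1 - s).
Proof.
  intros Hs Hs1. pose proof (Cmod_ge_0 y). 
  assert (Hnz : (1 - y)%C <> RtoC 0).
  { apply C_neq0_of_Cmod. eapply Rlt_le_trans; [|apply Cmod_1_minus]. lra. }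
  split.
  - destruct y as [a b]. pose proof (Cmod_sq (a, b)) as Hsq. rewrite Hs in Hsq. simpl in Hsq.
    pose proof (re_le_Cmod (a, b)) as Ha. rewrite Hs in Ha. simpl in Ha. apply Rabs_le_between in Ha.
    assert (Hd : 0 < (1 - a) ^ 2 + b ^ 2) by nra.
    assert (E : Re ((1 + (a, b)) / (1 - (a, b)))%C = (1 - a ^ 2 - b ^ 2) / ((1 - a) ^ 2 + b ^ 2)).
    { apply ReK_formula. lra. }
    rewrite E. apply Rmult_le_reg_r with ((1 + s) * ((1 - a) ^ 2 + b ^ 2)). nra.
    replace ((1 - s) / (1 + s) * ((1 + s) * ((1 - a) ^ 2 + b ^ 2))) with ((1 - s) * ((1 - a) ^ 2 + b ^ 2)) by (field; lra).
    replace ((1 - a ^ 2 - b ^ 2) / ((1 - a) ^ 2 + b ^ 2) * ((1 + s) * ((1 - a) ^ 2 + b ^ 2)))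
      with ((1 - a ^ 2 - b ^ 2) * (1 + s)) by (field; lra).
    nra.
  - rewrite Cmod_div by auto. apply Rmult_le_reg_r with (Cmod (1 - y)).
    apply Cmod_gt_0; auto. unfold Rdiv at 1. rewrite Rmult_assoc, Rinv_l, Rmult_1_r.
    2:{ intros E. apply Hnz. apply Cmod_eq_0. auto. }
    pose proof (Cmod_1_minus y). pose proof (Cmod_triangle 1 y). rewrite Cmod_1 in H1.
    apply Rle_trans with (1 + s). lra.
    apply Rle_trans with ((1 + s) / (1 - s) * (1 - s)). right; field; lra.
    apply Rmult_le_compat_l. apply Rdiv_le_0_compat; lra. lra.
Qed.

Lemma partial_max_exact (t : R) N : 0 <= t < 1 -> forall n,
  @eq R (sum_n (fun k => t ^ (Nat.max k N)) n)
  (if (n <? N)%nat then INR (S n) * t ^ N else INR N * t ^ N + (t ^ N - t ^ S n) / (1 - t)).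
Proof.
  intros Ht. induction n.
  - rewrite sum_O. destruct (Nat.ltb_spec 0 N); cbv iota beta.
    + rewrite Nat.max_r by lia. simpl. ring.
    + assert (N = 0%nat) by lia. subst. simpl. field. lra.
  - rewrite sum_Sn, IHn. change (plus ?a ?b) with (a + b).
    destruct (Nat.ltb_spec n N); destruct (Nat.ltb_spec (S n) N); cbv iota beta.
    + rewrite Nat.max_r by lia. rewrite (S_INR (S n)). ring.
    + assert (S n = N) by lia. subst N. rewrite Nat.max_l by lia.
      replace (t ^ S (S n)) with (t * t ^ S n) by (simpl; ring). field. lra.
    + lia.
    + rewrite Nat.max_l by lia.
      replace (t ^ S (S n)) with (t * t ^ S n) by (simpl; ring). field. lra.
Qed.

Definition BN (t : R) (N : nat) := INR N * t ^ N + t ^ N / (1 - t).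

Lemma partial_max (t : R) N : 0 <= t < 1 -> forall n,
  sum_n (fun k => t ^ (Nat.max k N)) n <= BN t N.
Proof.
  intros Ht n. rewrite partial_max_exact by auto. unfold BN.
  pose proof (pow_le t N (proj1 Ht)). pose proof (pow_le t (S n) (proj1 Ht)).
  assert (0 <= t ^ N / (1 - t)) by (apply Rdiv_le_0_compat; lra).
  destruct (Nat.ltb_spec n N).
  - assert (INR (S n) <= INR N) by (apply le_INR; lia). nra.
  - assert ((t ^ N - t ^ S n) / (1 - t) <= t ^ N / (1 - t)).
    { unfold Rdiv. apply Rmult_le_compat_r. left; apply Rinv_0_lt_compat; lra. lra. } lra.
Qed.

Lemma BN_small (t : R) : 0 <= t < 1 -> forall eps, 0 < eps -> exists N, (0 < N)%nat /\ BN t N < eps.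
Proof.
  intros Ht eps He.
  pose proof (lim_nqn t Ht) as H1. apply is_lim_seq_spec in H1.
  assert (Ht' : Rabs t < 1) by (rewrite Rabs_pos_eq; lra).
  pose proof (is_lim_seq_geom t Ht') as H2. apply is_lim_seq_spec in H2.
  destruct (H1 (mkposreal (eps / 2) ltac:(lra))) as [N1 HN1].
  destruct (H2 (mkposreal (eps / 2 * (1 - t)) ltac:(apply Rmult_lt_0_compat; lra))) as [N2 HN2].
  exists (S (N1 + N2)). split. lia.
  specialize (HN1 (S (N1 + N2)) ltac:(lia)). specialize (HN2 (S (N1 + N2)) ltac:(lia)).
  simpl pos in HN1, HN2. rewrite Rminus_0_r in HN1, HN2.
  apply Rabs_lt_between in HN1. apply Rabs_lt_between in HN2. unfold BN.
  assert (t ^ S (N1 + N2) / (1 - t) < eps / 2).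
  { apply Rmult_lt_reg_r with (1 - t). lra. unfold Rdiv. rewrite Rmult_assoc, Rinv_l; lra. }
  lra.
Qed.

Lemma lim_arg (t X Y D : R) : 0 <= t < 1 -> 0 <= D ->
  (forall N, (0 < N)%nat -> X <= Y + D * BN t N) -> X <= Y.
Proof.
  intros Ht HD H. destruct (Rle_lt_dec X Y) as [|Hlt]; auto. exfalso.
  destruct (BN_small t Ht ((X - Y) / (D + 1))) as [N [HN HB]].
  apply Rdiv_lt_0_compat; lra.
  specialize (H N HN). assert (0 <= BN t N).
  { unfold BN. apply Rplus_le_le_0_compat. apply Rmult_le_pos. apply pos_INR. apply pow_le; lra.
    apply Rdiv_le_0_compat. apply pow_le; lra. lra. }
  assert (D * BN t N <= (D + 1) * BN t N) by nra.
  assert ((D + 1) * BN t N < X - Y).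
  { apply Rmult_lt_reg_r with (/ (D + 1)). apply Rinv_0_lt_compat; lra.
    replace ((D + 1) * BN t N * / (D + 1)) with (BN t N) by (field; lra). exact HB. }
  lra.
Qed.

Lemma sum_n_scal_R (a : R) (u : nat -> R) n : @eq R (sum_n (fun k => a * u k) n) (a * sum_n u n).
Proof. induction n. rewrite !sum_O; auto. rewrite !sum_Sn, IHn. change (a * sum_n u n + a * u (S n) = a * (sum_n u n + u (S n))). ring. Qed.

Lemma pow_le1 x n : 0 <= x <= 1 -> x ^ n <= 1.
Proof. intros H. rewrite <- (pow1 n). apply pow_incr. auto. Qed.

Lemma err_gen (c e : nat -> C) (rho M t s : R) N (L : C) :
  0 <= t < 1 -> s < 1 ->
  (forall m, Cmod (c m) * rho ^ m <= M * t ^ m) -> 0 <= rho ->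
  (forall m, t ^ m * Cmod (e m) <= 2 / (1 - s) * t ^ (Nat.max m N)) ->
  Cis (fun m => c m * RtoC (rho ^ m) * e m)%C L -> Cmod L <= M * (2 / (1 - s)) * BN t N.
Proof.
  intros Ht Hs Hc Hr He HL. apply (Cis_norm_le _ _ _ HL). intros n.
  apply Rle_trans with (sum_n (fun k => M * (2 / (1 - s)) * t ^ (Nat.max k N)) n).
  - apply sum_n_m_le. intros k. rewrite !Cmod_mult, Cmod_RtoC_pos by (apply pow_le; auto).
    pose proof (Hc k). pose proof (He k). pose proof (Cmod_ge_0 (e k)).
    pose proof (Cmod_ge_0 (c k)). pose proof (pow_le rho k Hr).
    assert (0 <= M). { pose proof (Hc O) as X. simpl in X. pose proof (Cmod_ge_0 (c O)). nra. }
    apply Rle_trans with (M * t ^ k * Cmod (e k)). apply Rmult_le_compat_r; auto.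
    replace (M * (2 / (1 - s)) * t ^ Nat.max k N) with (M * (2 / (1 - s) * t ^ Nat.max k N)) by ring.
    rewrite Rmult_assoc. apply Rmult_le_compat_l; auto.
  - rewrite sum_n_scal_R. apply Rmult_le_compat_l.
    + assert (0 <= M). { pose proof (Hc O) as X. simpl in X. pose proof (Cmod_ge_0 (c O)). nra. }
      apply Rmult_le_pos; auto. apply Rdiv_le_0_compat; lra.
    + apply partial_max; auto.
Qed.

Lemma Cis_delta0 (a : nat -> C) : Cis (fun m => a m * (if (m =? 0)%nat then RtoC 1 else RtoC 0))%C (a O).
Proof.
  rewrite Cis_eps. intros eps He. exists O. intros n _.
  assert (E : sum_n (fun m => a m * (if (m =? 0)%nat then RtoC 1 else RtoC 0))%C n = a O).
  { induction n. rewrite sum_O. simpl. ring. rewrite sum_Sn, IHn. simpl.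
    change (a O + a (S n) * 0 = a O)%C. ring. }
  rewrite E. replace (a O - a O)%C with (RtoC 0) by ring. rewrite Cmod_0. lra.
Qed.

Lemma Cconj_RtoC (a : R) : Cconj (RtoC a) = RtoC a.
Proof. unfold Cconj, RtoC; simpl. f_equal. ring. Qed.

Section Kernel.
Variable N : nat.
Hypothesis HN : (0 < N)%nat.
Variables (x : C) (s t : R).
Hypothesis Hxs : Cmod x = s.
Hypothesis Hs1 : s < 1.
Hypothesis Hst : s <= t.
Hypothesis Ht1 : t < 1.

Let w := om N.
Let wb := Cconj (om N).
Let Hx : Cmod x < 1. Proof. lra. Qed.

Lemma s_pos : 0 <= s. Proof. rewrite <- Hxs. apply Cmod_ge_0. Qed.

Lemma D_bound : 1 - s <= Cmod (1 - Cpow x N).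
Proof.
  eapply Rle_trans; [|apply Cmod_1_minus]. rewrite Cmod_pow, Hxs.
  pose proof s_pos. assert (s ^ N <= s).
  { destruct N. lia. change (s ^ S n) with (s * s ^ n). pose proof (pow_le1 s n ltac:(lra)). nra. }
  lra.
Qed.

Lemma frac_bound k : Cmod (Cpow x k / (1 - Cpow x N))%C <= s ^ k / (1 - s).
Proof.
  pose proof s_pos. pose proof D_bound.
  rewrite Cmod_div by (apply D_nz; auto). rewrite Cmod_pow, Hxs.
  unfold Rdiv. apply Rmult_le_compat_l. apply pow_le; auto.
  apply Rinv_le_contravar; lra.
Qed.

Definition ta1 m := (/ INR N * csum (fun j => Cpow (Cpow w j) m * Gk N x j) N)%C.
Definition ta2 m := (/ INR N * csum (fun j => Cpow (Cpow wb j) m * Gk N x j) N)%C.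
Definition ta0 m := (/ INR N * csum (fun j => Cpow (Cpow w j) m) N)%C.
Definition delta0 (m : nat) : C := if (m =? 0)%nat then RtoC 1 else RtoC 0.

Lemma tau_gen_bound (a : C) m : Cmod a = 1 ->
  Cmod (/ INR N * csum (fun j => Cpow (Cpow a j) m * Gk N x j) N)%C <= / (1 - s).
Proof.
  intros Ha. apply avg_bound; auto. left. apply Rinv_0_lt_compat; lra.
  intros j _. rewrite Cmod_mult, !Cmod_pow, Ha, !pow1, Rmult_1_l, <- Hxs. apply Gk_bound; auto.
Qed.

Lemma tpow_le1 k : t ^ k <= 1.
Proof. pose proof s_pos. apply pow_le1; lra. Qed.

Lemma spow_le_t k : s ^ k <= t ^ k.
Proof. pose proof s_pos. apply pow_incr; lra. Qed.

Lemma e1_bound m : t ^ m * Cmod (ta1 m - Cpow x m) <= 2 / (1 - s) * t ^ (Nat.max m N).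
Proof.
  pose proof s_pos. assert (Hts : 0 < 1 - s) by lra.
  pose proof (pow_le t m ltac:(lra)). pose proof (tpow_le1 m).
  destruct (Compare_dec.lt_dec m N) as [Hm|Hm].
  - rewrite Nat.max_r by lia. unfold ta1, w. rewrite tau1 by auto.
    replace (Cpow x m / (1 - Cpow x N) - Cpow x m)%C with (Cpow x m * (Cpow x N / (1 - Cpow x N)))%C
      by (field; apply D_nz; auto).
    rewrite Cmod_mult, Cmod_pow, Hxs.
    pose proof (frac_bound N). pose proof (pow_le s m H). pose proof (pow_le1 s m ltac:(lra)).
    pose proof (spow_le_t N). pose proof (Cmod_ge_0 (Cpow x N / (1 - Cpow x N))%C).
    apply Rle_trans with (1 * (1 * (s ^ N / (1 - s)))).
    apply Rmult_le_compat; auto. apply Rmult_le_pos; auto. apply Rmult_le_compat; auto.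
    rewrite !Rmult_1_l. unfold Rdiv. rewrite Rmult_comm. 
    replace (2 * / (1 - s) * t ^ N) with (/ (1 - s) * (2 * t ^ N)) by ring.
    apply Rmult_le_compat_l. left; apply Rinv_0_lt_compat; lra. pose proof (pow_le t N ltac:(lra)). lra.
  - rewrite Nat.max_l by lia.
    assert (Cmod (ta1 m - Cpow x m) <= 2 / (1 - s)).
    { unfold Cminus. eapply Rle_trans. apply Cmod_triangle. rewrite Cmod_opp, Cmod_pow, Hxs.
      pose proof (tau_gen_bound w m (Cmod_om N)). unfold ta1.
      pose proof (pow_le1 s m ltac:(lra)).
      assert (1 <= / (1 - s)). { rewrite <- Rinv_1. apply Rinv_le_contravar; lra. }
      unfold Rdiv. lra. }
    rewrite Rmult_comm. apply Rmult_le_compat_r; auto.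
Qed.

Lemma e2_bound m : t ^ m * Cmod (ta2 m - delta0 m) <= 2 / (1 - s) * t ^ (Nat.max m N).
Proof.
  pose proof s_pos. assert (Hts : 0 < 1 - s) by lra.
  pose proof (pow_le t m ltac:(lra)). pose proof (tpow_le1 m).
  assert (Hinv : 0 < / (1 - s)) by (apply Rinv_0_lt_compat; lra).
  destruct (Compare_dec.lt_dec m N) as [Hm|Hm].
  - rewrite Nat.max_r by lia. unfold ta2, wb. rewrite tau2 by auto. unfold delta0.
    destruct (Nat.eqb_spec m 0) as [E|E].
    + subst m. simpl pow. rewrite Rmult_1_l.
      replace (Cpow x 0 / (1 - Cpow x N) - 1)%C with (Cpow x N / (1 - Cpow x N))%C
        by (simpl; field; apply D_nz; auto).
      eapply Rle_trans. apply frac_bound. pose proof (spow_le_t N). pose proof (pow_le t N ltac:(lra)).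
      unfold Rdiv. nra.
    + replace (Cpow x (N - m) / (1 - Cpow x N) - 0)%C with (Cpow x (N - m) / (1 - Cpow x N))%C by ring.
      pose proof (frac_bound (N - m)). pose proof (spow_le_t (N - m)).
      pose proof (pow_le s (N - m) H).
      assert (Htt : t ^ m * t ^ (N - m) = t ^ N) by (rewrite <- pow_add; f_equal; lia).
      apply Rle_trans with (t ^ m * (t ^ (N - m) / (1 - s))).
      apply Rmult_le_compat_l; auto. eapply Rle_trans; eauto. unfold Rdiv. apply Rmult_le_compat_r; lra.
      replace (t ^ m * (t ^ (N - m) / (1 - s))) with (/ (1 - s) * (t ^ m * t ^ (N - m))) by (field; lra).
      rewrite Htt. pose proof (pow_le t N ltac:(lra)). unfold Rdiv. nra.
  - rewrite Nat.max_l by lia. unfold delta0. destruct (Nat.eqb_spec m 0); [lia|].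
    replace (ta2 m - 0)%C with (ta2 m) by ring.
    pose proof (tau_gen_bound wb m ltac:(unfold wb; rewrite Cmod_conj; apply Cmod_om)). fold (ta2 m) in H2.
    apply Rle_trans with (t ^ m * / (1 - s)). apply Rmult_le_compat_l; auto.
    unfold Rdiv. nra.
Qed.

Lemma e0_bound m : t ^ m * Cmod (ta0 m - delta0 m) <= 2 / (1 - s) * t ^ (Nat.max m N).
Proof.
  pose proof s_pos. assert (Hts : 0 < 1 - s) by lra.
  pose proof (pow_le t m ltac:(lra)). pose proof (tpow_le1 m).
  assert (Hinv : 1 <= / (1 - s)) by (rewrite <- Rinv_1; apply Rinv_le_contravar; lra).
  destruct (Compare_dec.lt_dec m N) as [Hm|Hm].
  - unfold ta0, w. rewrite tau0 by auto. unfold delta0.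
    replace ((if (m =? 0)%nat then RtoC 1 else RtoC 0) - (if (m =? 0)%nat then RtoC 1 else RtoC 0))%C
      with (RtoC 0) by ring. rewrite Cmod_0, Rmult_0_r. apply Rmult_le_pos.
    apply Rdiv_le_0_compat; lra. apply pow_le; lra.
  - rewrite Nat.max_l by lia. unfold delta0. destruct (Nat.eqb_spec m 0); [lia|].
    replace (ta0 m - 0)%C with (ta0 m) by ring.
    assert (Cmod (ta0 m) <= 1).
    { unfold ta0. apply avg_bound; auto. lra. intros j _. rewrite !Cmod_pow. unfold w. rewrite Cmod_om, !pow1. lra. }
    apply Rle_trans with (t ^ m * 1). apply Rmult_le_compat_l; auto.
    unfold Rdiv. nra.
Qed.

End Kernel.

Lemma RtoC_inv' (a : R) : a <> 0 -> (/ RtoC a)%C = RtoC (/ a).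
Proof. intros. unfold Cinv, RtoC; simpl. f_equal; field; auto. Qed.

Lemma rsum_scal (a : R) (f : nat -> R) n : rsum (fun j => a * f j) n = a * rsum f n.
Proof. induction n; simpl. ring. rewrite IHn. ring. Qed.

Lemma Re_mult1 (z : C) : Re (z * RtoC 1) = Re z.
Proof. rewrite Cmult_1_r. auto. Qed.

Section Cara.
Variables (c : nat -> C) (p : C -> C).
Hypothesis Hs : series_on_disk c p.
Hypothesis Hc0 : c O = RtoC 1.
Hypothesis Hpos : forall zeta, Cmod zeta < 1 -> 0 < Re (p zeta).
Variables (z : C) (rho M t : R).
Hypothesis Hz : Cmod z < rho.
Hypothesis Hrho : rho < 1.
Hypothesis HMt : forall m, Cmod (c m) * rho ^ m <= M * t ^ m.
Hypothesis Ht : 0 <= t < 1.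
Hypothesis Hst : Cmod z / rho <= t.

Let s := Cmod z / rho.
Let x := (z * / RtoC rho)%C.

Lemma rho_pos : 0 < rho.
Proof. pose proof (Cmod_ge_0 z). lra. Qed.

Lemma Hxs : Cmod x = s.
Proof.
  pose proof rho_pos. unfold x, s. rewrite Cmod_mult, Cmod_inv, Cmod_RtoC_pos; try lra.
  unfold Rdiv. auto. intros E. injection E. lra.
Qed.

Lemma Hs1 : s < 1.
Proof. pose proof rho_pos. unfold s. apply Rmult_lt_reg_r with rho; auto. unfold Rdiv. rewrite Rmult_assoc, Rinv_l; lra. Qed.

Lemma s_nonneg : 0 <= s.
Proof. pose proof rho_pos. unfold s. apply Rdiv_le_0_compat. apply Cmod_ge_0. lra. Qed.

Lemma Hzx : z = (RtoC rho * x)%C.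
Proof. pose proof rho_pos. unfold x. field. intros E. injection E. lra. Qed.

Lemma M_ge1 : 1 <= M.
Proof. pose proof (HMt O). rewrite Hc0, Cmod_1 in H. simpl in H. lra. Qed.

Variable N : nat.
Hypothesis HN : (0 < N)%nat.

Let w := om N.
Let wb := Cconj (om N).
Let Pj j := p (RtoC rho * Cpow w j)%C.

Lemma Pj_in j : Cmod (RtoC rho * Cpow w j)%C < 1.
Proof.
  pose proof rho_pos. rewrite Cmod_mult, Cmod_pow, Cmod_RtoC_pos by lra. unfold w. rewrite Cmod_om, pow1. lra.
Qed.

Lemma HPj j : Cis (fun m => c m * RtoC (rho ^ m) * Cpow (Cpow w j) m)%C (Pj j).
Proof.
  pose proof (Hs _ (Pj_in j)) as H. apply is_pseries_C in H. eapply Cis_ext; [|exact H].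
  intros m. simpl. rewrite Cpow_mult_l, RtoC_pow. ring.
Qed.

Lemma HPjc j : Cis (fun m => Cconj (c m) * RtoC (rho ^ m) * Cpow (Cpow wb j) m)%C (Cconj (Pj j)).
Proof.
  eapply Cis_ext; [|apply Cis_conj, HPj]. intros m. simpl.
  rewrite !Cmult_conj, Cconj_RtoC, !Cpow_conj. auto.
Qed.

Lemma avg_series (F : nat -> nat -> C) (L g : nat -> C) :
  (forall j, Cis (F j) (L j)) ->
  Cis (fun m => / INR N * csum (fun j => F j m * g j) N)%C (/ INR N * csum (fun j => L j * g j) N)%C.
Proof.
  intros H. apply Cis_scal. apply Cis_csum. intros j _.
  replace (L j * g j)%C with (g j * L j)%C by ring.
  eapply Cis_ext; [|apply (Cis_scal (g j)), H]. intros m. simpl. ring.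
Qed.

Lemma pull_coef (a : C) (f g : nat -> C) :
  (/ INR N * csum (fun j => a * f j * g j) N)%C = (a * (/ INR N * csum (fun j => f j * g j) N))%C.
Proof.
  rewrite (csum_ext _ (fun j => a * (f j * g j))%C) by (intros; ring). rewrite csum_scal. ring.
Qed.

Let T1 := (/ INR N * csum (fun j => Pj j * Gk N x j) N)%C.
Let T2 := (/ INR N * csum (fun j => Cconj (Pj j) * Gk N x j) N)%C.
Let T0 := (/ INR N * csum (fun j => Pj j * RtoC 1) N)%C.
Let T0c := (/ INR N * csum (fun j => Cconj (Pj j) * RtoC 1) N)%C.

Lemma HT1 : Cis (fun m => c m * RtoC (rho ^ m) * ta1 N x m)%C T1.
Proof.
  eapply Cis_ext; [|apply (avg_series _ Pj (Gk N x) HPj)]. intros m. simpl.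
  rewrite pull_coef. auto.
Qed.

Lemma HT2 : Cis (fun m => Cconj (c m) * RtoC (rho ^ m) * ta2 N x m)%C T2.
Proof.
  eapply Cis_ext; [|apply (avg_series _ (fun j => Cconj (Pj j)) (Gk N x) HPjc)]. intros m. simpl.
  rewrite pull_coef. auto.
Qed.

Lemma HT0 : Cis (fun m => c m * RtoC (rho ^ m) * ta0 N m)%C T0.
Proof.
  eapply Cis_ext; [|apply (avg_series _ Pj (fun _ => RtoC 1) HPj)]. intros m. simpl.
  rewrite pull_coef. unfold ta0. f_equal. f_equal. apply csum_ext. intros. apply Cmult_1_r.
Qed.

Lemma Hpz : Cis (fun m => c m * RtoC (rho ^ m) * Cpow x m)%C (p z).
Proof.
  assert (Cmod z < 1) by lra. pose proof (Hs _ H) as H'. apply is_pseries_C in H'.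
  eapply Cis_ext; [|exact H']. intros m. simpl. rewrite Hzx at 1. rewrite Cpow_mult_l, RtoC_pow. ring.
Qed.

Let Cc := M * (2 / (1 - s)).

Lemma HMt' : forall m, Cmod (Cconj (c m)) * rho ^ m <= M * t ^ m.
Proof. intros. rewrite Cmod_conj. auto. Qed.

Lemma E1 : Cmod (T1 - p z) <= Cc * BN t N.
Proof.
  pose proof rho_pos. pose proof Hxs. pose proof Hs1.
  apply (err_gen c (fun m => ta1 N x m - Cpow x m)%C rho M t s N); auto; try lra.
  - intros m. exact (e1_bound N HN x s t Hxs Hs1 Hst (proj2 Ht) m).
  - replace (T1 - p z)%C with (T1 + -1 * p z)%C by ring.
    eapply Cis_ext; [|apply (Cis_plus _ _ _ _ HT1 (Cis_scal (-1) _ _ Hpz))].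
    intros m. simpl. ring. 
Qed.

Lemma E2 : Cmod (T2 - 1) <= Cc * BN t N.
Proof.
  pose proof rho_pos. pose proof Hxs. pose proof Hs1.
  apply (err_gen (fun m => Cconj (c m)) (fun m => ta2 N x m - delta0 m)%C rho M t s N); auto; try lra.
  - exact HMt'.
  - intros m. exact (e2_bound N HN x s t Hxs Hs1 Hst (proj2 Ht) m).
  - pose proof (Cis_delta0 (fun m => Cconj (c m) * RtoC (rho ^ m))%C) as Hd.
    simpl in Hd. rewrite Hc0 in Hd. 
    replace (Cconj 1 * 1)%C with (RtoC 1) in Hd by (rewrite Cconj_RtoC; ring).
    replace (T2 - 1)%C with (T2 + -1 * 1)%C by ring.
    eapply Cis_ext; [|apply (Cis_plus _ _ _ _ HT2 (Cis_scal (-1) _ _ Hd))].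
    intros m. unfold delta0. simpl. ring.
Qed.

Lemma E0 : Cmod (T0 - 1) <= Cc * BN t N.
Proof.
  pose proof rho_pos. pose proof Hxs. pose proof Hs1.
  apply (err_gen c (fun m => ta0 N m - delta0 m)%C rho M t s N); auto; try lra.
  - intros m. exact (e0_bound N HN x s t Hxs Hs1 Hst (proj2 Ht) m).
  - pose proof (Cis_delta0 (fun m => c m * RtoC (rho ^ m))%C) as Hd.
    simpl in Hd. rewrite Hc0 in Hd. 
    replace (1 * 1)%C with (RtoC 1) in Hd by ring.
    replace (T0 - 1)%C with (T0 + -1 * 1)%C by ring.
    eapply Cis_ext; [|apply (Cis_plus _ _ _ _ HT0 (Cis_scal (-1) _ _ Hd))].
    intros m. unfold delta0. simpl. ring.
Qed.

Let u j := Re (Pj j).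
Let Kj j := (2 * Gk N x j - 1)%C.
Let S := (/ INR N * csum (fun j => RtoC (u j) * Kj j) N)%C.

Lemma INR_N_nz : INR N <> 0.
Proof. apply not_0_INR. lia. Qed.

Lemma INR_N_nzC : RtoC (INR N) <> RtoC 0.
Proof. intros E. injection E. apply INR_N_nz. Qed.

Lemma T0c_conj : T0c = Cconj T0.
Proof.
  unfold T0c, T0. rewrite Cmult_conj, Cinv_conj by apply INR_N_nzC. rewrite Cconj_RtoC, csum_conj.
  f_equal. apply csum_ext. intros. rewrite Cmult_conj, Cconj_RtoC. auto.
Qed.

Lemma SA : S = (T1 + T2 - (T0 + T0c) / 2)%C.
Proof.
  unfold S. rewrite (csum_ext _ (fun j => Pj j * Gk N x j + Cconj (Pj j) * Gk N x j
      + (- / 2) * (Pj j * RtoC 1) + (- / 2) * (Cconj (Pj j) * RtoC 1))%C).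
  - rewrite !csum_plus, !csum_scal. unfold T1, T2, T0, T0c. field. apply INR_N_nzC.
  - intros j _. unfold u, Kj. rewrite re_alt. field.
Qed.

Lemma Kj_form j : Kj j = ((1 + x * Cpow wb j) / (1 - x * Cpow wb j))%C.
Proof.
  unfold Kj, Gk. fold wb. field. apply y_nz; auto. rewrite Hxs. apply Hs1.
Qed.

Lemma Kj_mod j : Cmod (x * Cpow wb j) = s.
Proof. rewrite Cmod_mult, Cmod_pow, Hxs. unfold wb. rewrite Cmod_conj, Cmod_om, pow1. ring. Qed.

Lemma u_pos j : 0 < u j.
Proof. unfold u. apply Hpos. apply Pj_in. Qed.

Lemma SB : (1 - s) / (1 + s) * Re T0 <= Re S.
Proof.
  pose proof INR_N_nz. assert (HN' : 0 < INR N) by (apply lt_0_INR; lia).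
  unfold S, T0. rewrite !RtoC_inv' by auto. rewrite !Re_scal_real, !Re_csum.
  rewrite (rsum_ext (fun j => Re (Pj j * RtoC 1)) u) by (intros; apply Re_mult1).
  rewrite (rsum_ext (fun j => Re (RtoC (u j) * Kj j)) (fun j => u j * Re (Kj j))) by (intros; apply Re_scal_real).
  rewrite <- Rmult_assoc, (Rmult_comm _ (/ INR N)), Rmult_assoc. apply Rmult_le_compat_l.
  left. apply Rinv_0_lt_compat; auto.
  rewrite <- rsum_scal. apply rsum_le. intros j _. pose proof (u_pos j). rewrite Kj_form.
  destruct (ReK_bound _ s (Kj_mod j) Hs1) as [Ha Hb]. nra.
Qed.

Lemma SC : Cmod S <= (1 + s) / (1 - s) * Re T0.
Proof.
  pose proof INR_N_nz. assert (HN' : 0 < INR N) by (apply lt_0_INR; lia).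
  unfold S, T0. rewrite !RtoC_inv' by auto. rewrite Re_scal_real, Re_csum.
  rewrite (rsum_ext (fun j => Re (Pj j * RtoC 1)) u) by (intros; apply Re_mult1).
  rewrite Cmod_mult, Cmod_RtoC_pos by (left; apply Rinv_0_lt_compat; auto).
  rewrite <- Rmult_assoc, (Rmult_comm _ (/ INR N)), Rmult_assoc. apply Rmult_le_compat_l.
  left. apply Rinv_0_lt_compat; auto.
  eapply Rle_trans. apply csum_Cmod. rewrite <- rsum_scal. apply rsum_le. intros j _.
  rewrite Cmod_mult, Cmod_RtoC_pos by (left; apply u_pos). pose proof (u_pos j). rewrite Kj_form.
  destruct (ReK_bound _ s (Kj_mod j) Hs1) as [Ha Hb]. nra.
Qed.

Lemma Key : (1 - s) / (1 + s) - 4 * (Cc * BN t N) <= Re (p z) /\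
            Cmod (p z) <= (1 + s) / (1 - s) + ((1 + s) / (1 - s) + 3) * (Cc * BN t N).
Proof.
  set (B := Cc * BN t N). pose proof E1 as H1. pose proof E2 as H2. pose proof E0 as H0.
  fold B in H1, H2, H0. pose proof s_nonneg. pose proof Hs1.
  assert (HB : 0 <= B). { eapply Rle_trans; [apply Cmod_ge_0|exact H0]. }
  assert (Hdiff : Cmod (S - p z) <= 3 * B).
  { rewrite SA, T0c_conj.
    replace (T1 + T2 - (T0 + Cconj T0) / 2 - p z)%C with
      ((T1 - p z) + (T2 - 1) + (- / 2) * ((T0 - 1) + Cconj (T0 - 1)))%C
      by (rewrite Cminus_conj, Cconj_RtoC; field).
    eapply Rle_trans. apply Cmod_triangle. eapply Rle_trans. apply Rplus_le_compat_r. apply Cmod_triangle.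
    rewrite Cmod_mult. eapply Rle_trans. apply Rplus_le_compat_l. apply Rmult_le_compat_l. apply Cmod_ge_0.
    apply Cmod_triangle. rewrite Cmod_conj.
    replace (Cmod (- / 2)) with (/ 2).
    - lra.
    - rewrite Cmod_opp, Cmod_inv, Cmod_RtoC_pos; try lra. intros E. injection E. lra. }
  assert (HT0l : 1 - B <= Re T0).
  { replace (Re T0) with (1 + Re (T0 - 1)) by (unfold Re; simpl; ring).
    pose proof (Re_ge_negCmod (T0 - 1)). lra. }
  assert (HT0u : Re T0 <= 1 + B).
  { replace (Re T0) with (1 + Re (T0 - 1)) by (unfold Re; simpl; ring).
    pose proof (Re_le_Cmod (T0 - 1)). lra. }
  pose proof SB. pose proof SC.
  assert (Hk : 0 < (1 - s) / (1 + s) <= 1).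
  { split. apply Rdiv_lt_0_compat; lra. apply Rmult_le_reg_r with (1 + s). lra.
    unfold Rdiv. rewrite Rmult_assoc, Rinv_l; lra. }
  assert (HK : 0 < (1 + s) / (1 - s)) by (apply Rdiv_lt_0_compat; lra).
  split.
  - replace (Re (p z)) with (Re S - Re (S - p z)) by (unfold Re; simpl; ring).
    pose proof (Re_le_Cmod (S - p z)). nra.
  - replace (p z) with (S - (S - p z))%C by ring.
    eapply Rle_trans. unfold Cminus at 1. apply Cmod_triangle. rewrite Cmod_opp. nra.
Qed.

End Cara.

Lemma cara_rho (c : nat -> C) (p : C -> C) :
  series_on_disk c p -> c O = RtoC 1 -> (forall zeta, Cmod zeta < 1 -> 0 < Re (p zeta)) ->
  forall z rho, Cmod z < rho -> rho < 1 ->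
  (rho - Cmod z) / (rho + Cmod z) <= Re (p z) /\ Cmod (p z) <= (rho + Cmod z) / (rho - Cmod z).
Proof.
  intros Hs Hc0 Hpos z rho Hz Hrho. pose proof (Cmod_ge_0 z). set (r := Cmod z) in *.
  assert (Hr : 0 < rho) by lra.
  set (rho' := (rho + 1) / 2).
  destruct (ps_bound c p Hs rho') as [M [HM0 HM]]. unfold rho'; lra.
  set (q := rho / rho'). set (s := r / rho).
  assert (Hq : 0 <= q < 1).
  { unfold q, rho'. split. apply Rdiv_le_0_compat; lra. apply Rmult_lt_reg_r with ((rho + 1) / 2). lra.
    unfold Rdiv. rewrite Rmult_assoc, Rinv_l. lra. lra. }
  assert (Hs0 : 0 <= s) by (unfold s; apply Rdiv_le_0_compat; lra).
  assert (Hs1 : s < 1) by (unfold s; apply Rmult_lt_reg_r with rho; auto; unfold Rdiv; rewrite Rmult_assoc, Rinv_l; lra).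
  set (t := Rmax q s).
  assert (Ht : 0 <= t < 1) by (unfold t; split; [apply Rmax_case; lra | apply Rmax_case; lra]).
  assert (HMt : forall m, Cmod (c m) * rho ^ m <= M * t ^ m).
  { intros m. specialize (HM m). assert (0 < rho' ^ m) by (apply pow_lt; unfold rho'; lra).
    assert (q ^ m = rho ^ m / rho' ^ m) by (unfold q; apply Rdiv_pow; unfold rho'; lra).
    assert (q ^ m <= t ^ m) by (apply pow_incr; split; [lra| apply Rmax_l]).
    apply Rle_trans with (M * q ^ m).
    - rewrite H1. apply Rmult_le_reg_r with (rho' ^ m); auto.
      replace (M * (rho ^ m / rho' ^ m) * rho' ^ m) with (M * rho ^ m) by (field; lra).
      replace (Cmod (c m) * rho ^ m * rho' ^ m) with ((Cmod (c m) * rho' ^ m) * rho ^ m) by ring.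
      apply Rmult_le_compat_r. apply pow_le; lra. auto.
    - apply Rmult_le_compat_l; auto. }
  assert (Hst : r / rho <= t) by apply Rmax_r.
  pose proof (fun N HN => Key c p Hs Hc0 Hpos z rho M t Hz Hrho HMt Ht Hst N HN) as HK.
  fold r s in HK.
  assert (E1 : (rho - r) / (rho + r) = (1 - s) / (1 + s)) by (unfold s; field; lra).
  assert (E2 : (rho + r) / (rho - r) = (1 + s) / (1 - s)) by (unfold s; field; lra).
  assert (Hc : 0 <= M * (2 / (1 - s))). { apply Rmult_le_pos; auto. apply Rdiv_le_0_compat; lra. }
  rewrite E1, E2. split.
  - apply (lim_arg t _ _ (4 * (M * (2 / (1 - s))))); auto. lra.
    intros N HN. destruct (HK N HN) as [H1 _]. lra.
  - assert (0 < (1 + s) / (1 - s)) by (apply Rdiv_lt_0_compat; lra).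
    apply (lim_arg t _ _ (((1 + s) / (1 - s) + 3) * (M * (2 / (1 - s))))); auto.
    apply Rmult_le_pos; lra.
    intros N HN. destruct (HK N HN) as [_ H2]. lra.
Qed.

Lemma diff1 r rho : 0 <= r < rho -> rho < 1 -> (1 - r) / (1 + r) - (rho - r) / (rho + r) <= 2 * (1 - rho).
Proof.
  intros H1 H2.
  replace ((1 - r) / (1 + r) - (rho - r) / (rho + r)) with (2 * r * (1 - rho) / ((1 + r) * (rho + r))) by (field; lra).
  apply Rmult_le_reg_r with ((1 + r) * (rho + r)). nra.
  replace (2 * r * (1 - rho) / ((1 + r) * (rho + r)) * ((1 + r) * (rho + r))) with (2 * r * (1 - rho)) by (field; lra).
  assert (r <= (1 + r) * (rho + r)) by nra.
  replace (2 * r * (1 - rho)) with ((2 * (1 - rho)) * r) by ring.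
  apply Rmult_le_compat_l; lra.
Qed.

Lemma diff2 r rho : 0 <= r < 1 -> (1 + r) / 2 <= rho -> rho < 1 ->
  (rho + r) / (rho - r) - (1 + r) / (1 - r) <= 4 * (1 - rho) / (1 - r) ^ 2.
Proof.
  intros H1 H2 H3.
  replace ((rho + r) / (rho - r) - (1 + r) / (1 - r)) with (2 * r * (1 - rho) / ((rho - r) * (1 - r))) by (field; lra).
  apply Rmult_le_reg_r with ((rho - r) * (1 - r) ^ 2). apply Rmult_lt_0_compat; [lra | apply pow_lt; lra].
  replace (2 * r * (1 - rho) / ((rho - r) * (1 - r)) * ((rho - r) * (1 - r) ^ 2)) with (2 * r * (1 - rho) * (1 - r)) by (field; lra).
  replace (4 * (1 - rho) / (1 - r) ^ 2 * ((rho - r) * (1 - r) ^ 2)) with (4 * (1 - rho) * (rho - r)) by (field; lra).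
  assert (2 * r * (1 - r) <= 4 * (rho - r)) by nra.
  replace (2 * r * (1 - rho) * (1 - r)) with ((1 - rho) * (2 * r * (1 - r))) by ring.
  replace (4 * (1 - rho) * (rho - r)) with ((1 - rho) * (4 * (rho - r))) by ring.
  apply Rmult_le_compat_l; lra.
Qed.

Lemma cara (c : nat -> C) (p : C -> C) :
  series_on_disk c p -> c O = RtoC 1 -> (forall zeta, Cmod zeta < 1 -> 0 < Re (p zeta)) ->
  forall z, Cmod z < 1 ->
  (1 - Cmod z) / (1 + Cmod z) <= Re (p z) /\ Cmod (p z) <= (1 + Cmod z) / (1 - Cmod z).
Proof.
  intros Hs Hc0 Hpos z Hz. pose proof (Cmod_ge_0 z). set (r := Cmod z) in *.
  split.
  - destruct (Rle_lt_dec ((1 - r) / (1 + r)) (Re (p z))) as [|Hlt]; auto. exfalso.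
    set (d := (1 - r) / (1 + r) - Re (p z)).
    set (rho := 1 - Rmin ((1 - r) / 2) (d / 4)).
    assert (Hm1 : Rmin ((1 - r) / 2) (d / 4) <= (1 - r) / 2) by apply Rmin_l.
    assert (Hm2 : Rmin ((1 - r) / 2) (d / 4) <= d / 4) by apply Rmin_r.
    assert (Hm3 : 0 < Rmin ((1 - r) / 2) (d / 4)) by (apply Rmin_pos; unfold d; lra).
    assert (Hrho1 : r < rho) by (unfold rho; lra). assert (Hrho2 : rho < 1) by (unfold rho; lra).
    destruct (cara_rho c p Hs Hc0 Hpos z rho Hrho1 Hrho2) as [H1 _]. fold r in H1.
    pose proof (diff1 r rho (conj H Hrho1) Hrho2).
    assert (1 - rho <= d / 4) by (unfold rho; lra).
    assert (Hdd : d = (1 - r) / (1 + r) - Re (p z)) by reflexivity.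
    assert (0 < d) by lra. lra.
  - destruct (Rle_lt_dec (Cmod (p z)) ((1 + r) / (1 - r))) as [|Hlt]; auto. exfalso.
    set (d := Cmod (p z) - (1 + r) / (1 - r)).
    assert (Hd : 0 < d) by (unfold d; lra).
    assert (Hr2 : 0 < (1 - r) ^ 2) by (apply pow_lt; lra).
    set (e := Rmin ((1 - r) / 2) (d * (1 - r) ^ 2 / 8)).
    assert (Hm1 : e <= (1 - r) / 2) by apply Rmin_l.
    assert (Hm2 : e <= d * (1 - r) ^ 2 / 8) by apply Rmin_r.
    assert (Hm3 : 0 < e) by (apply Rmin_pos; [lra | apply Rdiv_lt_0_compat; [apply Rmult_lt_0_compat|]; lra]).
    set (rho := 1 - e).
    assert (Hrho1 : r < rho) by (unfold rho; lra). assert (Hrho2 : rho < 1) by (unfold rho; lra).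
    destruct (cara_rho c p Hs Hc0 Hpos z rho Hrho1 Hrho2) as [_ H2]. fold r in H2.
    pose proof (diff2 r rho ltac:(lra) ltac:(unfold rho; lra) Hrho2) as H3.
    assert (4 * (1 - rho) / (1 - r) ^ 2 <= d / 2).
    { unfold rho. replace (1 - (1 - e)) with e by ring.
      apply Rmult_le_reg_r with ((1 - r) ^ 2); auto.
      replace (4 * e / (1 - r) ^ 2 * (1 - r) ^ 2) with (4 * e) by (field; lra). nra. }
    assert (Hdd : d = Cmod (p z) - (1 + r) / (1 - r)) by reflexivity. lra.
Qed.

Lemma mono_from_deriv (f df : R -> R) (r : R) : 0 <= r ->
  (forall t, 0 <= t <= r -> derivable_pt_lim f t (df t)) ->
  (forall t, 0 <= t <= r -> 0 <= df t) -> f 0 <= f r.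
Proof.
  intros Hr Hd Hp. destruct (Req_dec r 0) as [E|E]. subst. lra.
  destruct (MVT_cor2 f df 0 r ltac:(lra) Hd) as [c0 [Hc1 Hc2]].
  assert (0 <= df c0 * (r - 0)) by (apply Rmult_le_pos; [apply Hp; lra | lra]). lra.
Qed.

Lemma cf_bound alpha n : 0 <= alpha < 1 -> 0 <= cf alpha n <= 2.
Proof.
  intros Ha. destruct n as [|[|n]]; unfold cf; try lra.
  assert (1 <= INR (S (S n))) by (apply (le_INR 1); lia).
  split. apply Rdiv_le_0_compat; lra.
  apply Rmult_le_reg_r with (INR (S (S n))). lra. unfold Rdiv. rewrite Rmult_assoc, Rinv_l by lra. nra.
Qed.

Lemma Rgeom_is (q : R) : Rabs q < 1 -> is_series (fun n => q ^ n) (/ (1 - q)).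
Proof. apply is_series_geom. Qed.

Lemma delta_is (v : R) (k : nat) : is_series (fun n => if (n =? k)%nat then v else 0) v.
Proof.
  rewrite Ris_eps. intros eps He. exists k. intros n Hn.
  assert (Z : forall m, (m < k)%nat -> @eq R (sum_n (fun n => if (n =? k)%nat then v else 0) m) 0).
  { induction m; intros Hm.
    - rewrite sum_O. destruct (Nat.eqb_spec 0 k); [lia|auto].
    - rewrite sum_Sn, IHm by lia. destruct (Nat.eqb_spec (S m) k); [lia|]. change (0 + 0 = 0). ring. }
  assert (E : forall m, (k <= m)%nat -> @eq R (sum_n (fun n => if (n =? k)%nat then v else 0) m) v).
  { induction m; intros Hm.
    - assert (k = 0%nat) by lia. subst. rewrite sum_O. auto.
    - destruct (Nat.eq_dec k (S m)).
      + subst. rewrite sum_Sn, Z by lia. rewrite Nat.eqb_refl. change (0 + v = v). ring.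
      + rewrite sum_Sn, IHm by lia. destruct (Nat.eqb_spec (S m) k); [lia|]. change (v + 0 = v). ring. }
  rewrite E by auto. rewrite Rminus_eq_0, Rabs_R0. lra.
Qed.

Definition LA (alpha : R) (n : nat) : R := cf alpha n * (-1) ^ (n - 1).

Lemma pow_m1_abs k : Rabs ((-1) ^ k) = 1.
Proof. rewrite <- RPow_abs. replace (Rabs (-1)) with 1. apply pow1. rewrite Rabs_left; lra. Qed.

Lemma CV_LA alpha t : 0 <= alpha < 1 -> Rabs t < 1 -> Rbar_lt (Rabs t) (CV_radius (LA alpha)).
Proof.
  intros Ha Ht. apply CV_ge1; auto. intros r Hr. exists 2. intros n. unfold LA.
  rewrite !Rabs_mult, pow_m1_abs, Rabs_pos_eq by (apply cf_bound; auto). rewrite Rabs_pos_eq by (apply pow_le; lra).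
  pose proof (cf_bound alpha n Ha). assert (r ^ n <= 1) by (rewrite <- (pow1 n); apply pow_incr; lra).
  pose proof (pow_le r n (proj1 Hr)). nra.
Qed.

Lemma CV_UA alpha t : 0 <= alpha < 1 -> Rabs t < 1 -> Rbar_lt (Rabs t) (CV_radius (cf alpha)).
Proof.
  intros Ha Ht. apply CV_ge1; auto. intros r Hr. exists 2. intros n.
  rewrite !Rabs_mult, Rabs_pos_eq by (apply cf_bound; auto). rewrite Rabs_pos_eq by (apply pow_le; lra).
  pose proof (cf_bound alpha n Ha). assert (r ^ n <= 1) by (rewrite <- (pow1 n); apply pow_incr; lra).
  pose proof (pow_le r n (proj1 Hr)). nra.
Qed.

Lemma lower_eq alpha t : lower_bd alpha t = t + PSeries (LA alpha) t.
Proof. reflexivity. Qed.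
Lemma upper_eq alpha t : upper_bd alpha t = t + PSeries (cf alpha) t.
Proof. reflexivity. Qed.

Lemma INR_cf alpha k : INR (S (S k)) * cf alpha (S (S k)) = 2 * (1 - alpha).
Proof. unfold cf. field. apply not_0_INR. lia. Qed.

Lemma deriv_series_L alpha t : 0 <= alpha < 1 -> Rabs t < 1 ->
  PSeries (PS_derive (LA alpha)) t = 2 * (1 - alpha) * (/ (1 + t) - 1).
Proof.
  intros Ha Ht. apply is_series_unique.
  assert (Hg : Rabs (- t) < 1) by (rewrite Rabs_Ropp; auto).
  pose proof (is_series_minus _ _ _ _ (Rgeom_is (- t) Hg) (delta_is 1 0)) as H.
  apply (is_series_scal_l (K:=R_AbsRing) (V:=R_NormedModule) (2 * (1 - alpha))) in H.
  replace (2 * (1 - alpha) * (/ (1 + t) - 1)) with (scal (2 * (1 - alpha)) (plus (/ (1 - - t)) (opp 1))).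
  2:{ change (2 * (1 - alpha) * (/ (1 - - t) + - 1) = 2 * (1 - alpha) * (/ (1 + t) - 1)).
      replace (1 - - t) with (1 + t) by ring. ring. }
  eapply is_series_ext; [|exact H]. intros n. unfold PS_derive, LA.
  change (2 * (1 - alpha) * ((- t) ^ n + - (if (n =? 0)%nat then 1 else 0)) =
          INR (S n) * (cf alpha (S n) * (-1) ^ (S n - 1)) * t ^ n).
  destruct n as [|k].
  - simpl. unfold cf. ring.
  - replace (S (S k) - 1)%nat with (S k) by lia. simpl (S k =? 0)%nat.
    rewrite <- Rmult_assoc, INR_cf. replace (- t) with ((-1) * t) by ring. rewrite Rpow_mult_distr. ring.
Qed.

Lemma deriv_series_U alpha t : 0 <= alpha < 1 -> Rabs t < 1 ->
  PSeries (PS_derive (cf alpha)) t = 2 * (1 - alpha) * (/ (1 - t) - 1).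
Proof.
  intros Ha Ht. apply is_series_unique.
  pose proof (is_series_minus _ _ _ _ (Rgeom_is t Ht) (delta_is 1 0)) as H.
  apply (is_series_scal_l (K:=R_AbsRing) (V:=R_NormedModule) (2 * (1 - alpha))) in H.
  replace (2 * (1 - alpha) * (/ (1 - t) - 1)) with (scal (2 * (1 - alpha)) (plus (/ (1 - t)) (opp 1))) by reflexivity.
  eapply is_series_ext; [|exact H]. intros n. unfold PS_derive.
  change (2 * (1 - alpha) * (t ^ n + - (if (n =? 0)%nat then 1 else 0)) =
          INR (S n) * cf alpha (S n) * t ^ n).
  destruct n as [|k].
  - simpl. unfold cf. ring.
  - simpl (S k =? 0)%nat. rewrite INR_cf. ring.
Qed.

Lemma deriv_lower alpha t : 0 <= alpha < 1 -> Rabs t < 1 ->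
  derivable_pt_lim (lower_bd alpha) t (alpha + (1 - alpha) * (1 - t) / (1 + t)).
Proof.
  intros Ha Ht. apply is_derive_Reals.
  assert (Ht' : 1 + t <> 0) by (apply Rabs_lt_between in Ht; lra).
  replace (alpha + (1 - alpha) * (1 - t) / (1 + t)) with (plus 1 (PSeries (PS_derive (LA alpha)) t)).
  2:{ rewrite deriv_series_L by auto. change (1 + 2 * (1 - alpha) * (/ (1 + t) - 1) = alpha + (1 - alpha) * (1 - t) / (1 + t)).
      field. auto. }
  apply (is_derive_plus (fun t => t) (PSeries (LA alpha))). apply is_derive_Reals, derivable_pt_lim_id.
  apply is_derive_PSeries. apply CV_LA; auto.
Qed.

Lemma deriv_upper alpha t : 0 <= alpha < 1 -> Rabs t < 1 ->
  derivable_pt_lim (upper_bd alpha) t (alpha + (1 - alpha) * (1 + t) / (1 - t)).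
Proof.
  intros Ha Ht. apply is_derive_Reals.
  assert (Ht' : 1 - t <> 0) by (apply Rabs_lt_between in Ht; lra).
  replace (alpha + (1 - alpha) * (1 + t) / (1 - t)) with (plus 1 (PSeries (PS_derive (cf alpha)) t)).
  2:{ rewrite deriv_series_U by auto. change (1 + 2 * (1 - alpha) * (/ (1 - t) - 1) = alpha + (1 - alpha) * (1 + t) / (1 - t)).
      field. auto. }
  apply (is_derive_plus (fun t => t) (PSeries (cf alpha))). apply is_derive_Reals, derivable_pt_lim_id.
  apply is_derive_PSeries. apply CV_UA; auto.
Qed.

Lemma lower_0 alpha : lower_bd alpha 0 = 0.
Proof. rewrite lower_eq, PSeries_0. unfold LA, cf. ring. Qed.
Lemma upper_0 alpha : upper_bd alpha 0 = 0.
Proof. rewrite upper_eq, PSeries_0. unfold cf. ring. Qed.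

Lemma lower_nonneg alpha r : 0 <= alpha < 1 -> 0 <= r < 1 -> 0 <= lower_bd alpha r.
Proof.
  intros Ha Hr. rewrite <- (lower_0 alpha). apply (mono_from_deriv _ (fun t => alpha + (1 - alpha) * (1 - t) / (1 + t))).
  lra. intros t Ht. apply deriv_lower; auto. rewrite Rabs_pos_eq; lra.
  intros t Ht. apply Rplus_le_le_0_compat. lra. apply Rdiv_le_0_compat; [apply Rmult_le_pos|]; lra.
Qed.

Lemma upper_nonneg alpha r : 0 <= alpha < 1 -> 0 <= r < 1 -> 0 <= upper_bd alpha r.
Proof.
  intros Ha Hr. rewrite <- (upper_0 alpha). apply (mono_from_deriv _ (fun t => alpha + (1 - alpha) * (1 + t) / (1 - t))).
  lra. intros t Ht. apply deriv_upper; auto. rewrite Rabs_pos_eq; lra.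
  intros t Ht. apply Rplus_le_le_0_compat. lra. apply Rdiv_le_0_compat; [apply Rmult_le_pos|]; lra.
Qed.

Lemma chain_dir (Lf : C -> R) (f : C -> C) (l u : C) (t0 : R) :
  (forall a b, Lf (a + b)%C = Lf a + Lf b) -> (forall (r : R) a, Lf (RtoC r * a)%C = r * Lf a) ->
  (forall a, Rabs (Lf a) <= Cmod a) ->
  Cmod u = 1 -> is_derive f (RtoC t0 * u)%C l ->
  derivable_pt_lim (fun t => Lf (f (RtoC t * u)%C)) t0 (Lf (l * u)%C).
Proof.
  intros Hadd Hsc Hb Hu Hd eps Heps.
  destruct Hd as [_ Hd]. specialize (Hd (RtoC t0 * u)%C (fun P HP => HP)).
  destruct (Hd (mkposreal (eps / 2) ltac:(lra))) as [del Hdel].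
  exists del. intros h Hh0 Hh.
  set (z0 := (RtoC t0 * u)%C). set (y := (RtoC (t0 + h) * u)%C).
  assert (Hyz : (y - z0)%C = (RtoC h * u)%C) by (unfold y, z0; rewrite RtoC_plus; ring).
  assert (Hb2 : Cmod (y - z0) = Rabs h) by (rewrite Hyz, Cmod_mult, Hu, Cmod_R; ring).
  specialize (Hdel y). 
  assert (Hball : Cmod (y - z0)%C < del) by (rewrite Hb2; auto).
  specialize (Hdel Hball). simpl in Hdel.
  change (Cmod (f y - f z0 - (y - z0) * l)%C <= eps / 2 * Cmod (y - z0)%C) in Hdel.
  rewrite Hb2, Hyz in Hdel.
  assert (Hlin : Lf (f y) - Lf (f z0) - h * Lf (l * u)%C = Lf (f y - f z0 - RtoC h * u * l)%C).
  { assert (Hm : forall a, Lf (- a)%C = - Lf a).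
    { intros a. replace (- a)%C with (RtoC (-1) * a)%C by (unfold Copp, Cmult, RtoC; apply injective_projections; simpl; ring). rewrite Hsc. ring. }
    unfold Cminus. rewrite !Hadd, !Hm. replace (RtoC h * u * l)%C with (RtoC h * (l * u))%C by ring.
    rewrite Hsc. ring. }
  fold y z0.
  replace ((Lf (f y) - Lf (f z0)) / h - Lf (l * u)%C) with ((Lf (f y) - Lf (f z0) - h * Lf (l * u)%C) / h) by (field; auto).
  rewrite Hlin. unfold Rdiv. rewrite Rabs_mult, Rabs_inv.
  pose proof (Hb (f y - f z0 - RtoC h * u * l)%C).
  assert (0 < Rabs h) by (apply Rabs_pos_lt; auto).
  apply Rle_lt_trans with (eps / 2 * Rabs h * / Rabs h).
  apply Rmult_le_compat_r. left; apply Rinv_0_lt_compat; auto. lra.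
  field_simplify; lra.
Qed.

Lemma Lre_add (w a b : C) : Re (w * (a + b))%C = Re (w * a)%C + Re (w * b)%C.
Proof. unfold Re, Cmult, Cplus; simpl. ring. Qed.
Lemma Lre_sc (w : C) (r : R) a : Re (w * (RtoC r * a))%C = r * Re (w * a)%C.
Proof. unfold Re, Cmult, RtoC; simpl. ring. Qed.
Lemma Lre_b (w a : C) : Cmod w <= 1 -> Rabs (Re (w * a)%C) <= Cmod a.
Proof.
  intros Hw. eapply Rle_trans. apply re_le_Cmod. rewrite Cmod_mult.
  pose proof (Cmod_ge_0 a). nra.
Qed.
Lemma Lrc_add (w a b : C) : Re (w * Cconj (a + b))%C = Re (w * Cconj a)%C + Re (w * Cconj b)%C.
Proof. unfold Re, Cmult, Cplus, Cconj; simpl. ring. Qed.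
Lemma Lrc_sc (w : C) (r : R) a : Re (w * Cconj (RtoC r * a))%C = r * Re (w * Cconj a)%C.
Proof. unfold Re, Cmult, RtoC, Cconj; simpl. ring. Qed.
Lemma Lrc_b (w a : C) : Cmod w <= 1 -> Rabs (Re (w * Cconj a)%C) <= Cmod a.
Proof.
  intros Hw. eapply Rle_trans. apply re_le_Cmod. rewrite Cmod_mult, Cmod_conj.
  pose proof (Cmod_ge_0 a). nra.
Qed.

Lemma unit_of (w : C) : exists u, Cmod u = 1 /\ w = (u * RtoC (Cmod w))%C.
Proof.
  destruct (Req_dec (Cmod w) 0) as [E|E].
  - exists (RtoC 1). split. apply Cmod_1. rewrite E. apply Cmod_eq_0 in E. rewrite E. ring.
  - exists (w / RtoC (Cmod w))%C. assert (RtoC (Cmod w) <> RtoC 0) by (intros X; injection X; auto).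
    split.
    + rewrite Cmod_div by auto. rewrite Cmod_R, Rabs_pos_eq by apply Cmod_ge_0. field. auto.
    + field. auto.
Qed.

Lemma conj_unit (u : C) : Cmod u = 1 -> (Cconj u * u)%C = RtoC 1.
Proof. intros H. rewrite Cmult_comm, <- Cmod2_conj, H. simpl. f_equal. ring. Qed.

Lemma sum_n_RtoC (v : nat -> R) n : sum_n (fun k => RtoC (v k)) n = RtoC (sum_n v n).
Proof.
  induction n. rewrite !sum_O; auto. rewrite !sum_Sn, IHn.
  change (RtoC (sum_n v n) + RtoC (v (S n)) = RtoC (sum_n v n + v (S n)))%C. rewrite RtoC_plus. auto.
Qed.

Lemma Ris_to_Cis (v : nat -> R) V : is_series v V -> Cis (fun n => RtoC (v n)) (RtoC V).
Proof.
  rewrite Ris_eps, Cis_eps. intros H eps He. destruct (H eps He) as [N HN]. exists N. intros n Hn.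
  rewrite sum_n_RtoC, <- RtoC_minus, Cmod_R. apply HN; auto.
Qed.

Lemma Cgeom (z : C) : Cmod z < 1 -> Cis (fun n => Cpow z n) (/ (1 - z))%C.
Proof.
  intros Hz. pose proof (Cmod_ge_0 z).
  assert (Hnz : (1 - z)%C <> RtoC 0).
  { intros E. assert (z = RtoC 1) by (replace z with (1 - (1 - z))%C by ring; rewrite E; ring).
    subst. rewrite Cmod_1 in Hz. lra. }
  assert (HS : forall n, (sum_n (fun k => Cpow z k) n * (1 - z))%C = (1 - Cpow z (S n))%C).
  { induction n. rewrite sum_O. simpl. ring. rewrite sum_Sn.
    change ((sum_n (fun k => Cpow z k) n + Cpow z (S n)) * (1 - z) = 1 - Cpow z (S (S n)))%C.
    rewrite Cmult_plus_distr_r, IHn. simpl. ring. }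
  rewrite Cis_eps. intros eps He.
  assert (Hg : Rabs (Cmod z) < 1) by (rewrite Rabs_pos_eq; auto).
  pose proof (is_lim_seq_geom _ Hg) as Hl. apply is_lim_seq_spec in Hl.
  assert (Hd : 0 < 1 - Cmod z) by lra.
  destruct (Hl (mkposreal (eps * (1 - Cmod z)) ltac:(apply Rmult_lt_0_compat; lra))) as [N HN].
  exists N. intros n Hn. specialize (HN (S n) ltac:(lia)). simpl pos in HN. rewrite Rminus_0_r in HN.
  rewrite Rabs_pos_eq in HN by (apply pow_le; lra).
  assert (E : (sum_n (fun k => Cpow z k) n - / (1 - z))%C = (- Cpow z (S n) / (1 - z))%C).
  { transitivity (sum_n (fun k => Cpow z k) n * (1 - z) / (1 - z) - / (1 - z))%C.
    field. auto. rewrite HS. field. auto. }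
  rewrite E. unfold Cdiv. rewrite Cmod_mult, Cmod_opp, Cmod_inv, Cmod_pow by auto.
  pose proof (Cmod_1_minus z).
  apply Rle_lt_trans with (Cmod z ^ S n * / (1 - Cmod z)).
  apply Rmult_le_compat_l. apply pow_le; lra. apply Rinv_le_contravar; lra.
  apply Rmult_lt_reg_r with (1 - Cmod z); auto. rewrite Rmult_assoc, Rinv_l; lra.
Qed.

Lemma ser_at0 (a : nat -> C) h : series_on_disk a h -> h (RtoC 0) = a O.
Proof.
  intros Hs. assert (Cmod (RtoC 0) < 1) by (rewrite Cmod_0; lra).
  specialize (Hs _ H). apply is_pseries_C in Hs.
  apply (Cis_unique _ _ _ Hs). replace (a O) with (a O * Cpow (RtoC 0) 0)%C by (simpl; ring).
  eapply Cis_ext; [|apply (Cis_delta0 (fun m => a m * Cpow (RtoC 0) m)%C)].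
  intros m. destruct m; simpl; ring.
Qed.

Section Main.
Variable alpha : R.
Hypothesis Ha : 0 <= alpha < 1.
Variables (h g : C -> C) (a b : nat -> C).
Hypothesis Has : series_on_disk a h.
Hypothesis Hbs : series_on_disk b g.
Hypothesis Ha0 : a O = RtoC 0.
Hypothesis Ha1 : a 1%nat = RtoC 1.
Hypothesis Hb0 : b O = RtoC 0.
Hypothesis Hb1 : b 1%nat = RtoC 0.
Hypothesis Hder : forall z : C, Cmod z < 1 ->
     exists dh dg : C, is_derive h z dh /\ is_derive g z dg /\ Re (Cminus dh (RtoC alpha)) > Cmod dg.

Definition Dh z := C_derive h z.
Definition Dg z := C_derive g z.

Lemma Dprops z : Cmod z < 1 -> is_derive h z (Dh z) /\ is_derive g z (Dg z) /\ Re (Dh z - alpha) > Cmod (Dg z).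
Proof.
  intros Hz. destruct (Hder z Hz) as [dh [dg [H1 [H2 H3]]]]. unfold Dh, Dg.
  rewrite (is_C_derive_unique _ _ _ H1), (is_C_derive_unique _ _ _ H2). auto.
Qed.

Lemma Dh_ser z : Cmod z < 1 -> Cis (fun n => INR (S n) * a (S n) * Cpow z n)%C (Dh z).
Proof.
  intros Hz. destruct (ps_deriv a h Has z Hz) as [l [Hl Hd]]. unfold Dh. rewrite (is_C_derive_unique _ _ _ Hd). auto.
Qed.

Lemma Dg_ser z : Cmod z < 1 -> Cis (fun n => INR (S n) * b (S n) * Cpow z n)%C (Dg z).
Proof.
  intros Hz. destruct (ps_deriv b g Hbs z Hz) as [l [Hl Hd]]. unfold Dg. rewrite (is_C_derive_unique _ _ _ Hd). auto.
Qed.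

Lemma one_m_alpha_nz : RtoC (1 - alpha) <> RtoC 0.
Proof. intros E. injection E. lra. Qed.

Definition pe (eps : C) (z : C) : C := ((Dh z + eps * Dg z - RtoC alpha) / RtoC (1 - alpha))%C.
Definition ce (eps : C) (n : nat) : C :=
  ((INR (S n) * a (S n) + eps * (INR (S n) * b (S n)) - RtoC alpha * (if (n =? 0)%nat then RtoC 1 else RtoC 0))
   / RtoC (1 - alpha))%C.

Lemma pe_series eps : series_on_disk (ce eps) (pe eps).
Proof.
  intros z Hz. apply is_pseries_C.
  pose proof (Cis_plus _ _ _ _ (Cis_plus _ _ _ _ (Dh_ser z Hz) (Cis_scal eps _ _ (Dg_ser z Hz)))
                (Cis_scal (-1) _ _ (Cis_delta0 (fun m => RtoC alpha * Cpow z m)%C))) as H.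
  apply (Cis_scal (/ RtoC (1 - alpha))) in H.
  unfold pe. replace ((Dh z + eps * Dg z - RtoC alpha) / RtoC (1 - alpha))%C with
    (/ RtoC (1 - alpha) * (Dh z + eps * Dg z + -1 * (RtoC alpha * Cpow z 0)))%C.
  2:{ simpl. field. apply one_m_alpha_nz. }
  eapply Cis_ext; [|exact H]. intros n. unfold ce. simpl. field. apply one_m_alpha_nz.
Qed.

Lemma ce0 eps : ce eps O = RtoC 1.
Proof.
  unfold ce. simpl. rewrite Ha1, Hb1.
  replace (1 * 1 + eps * (1 * 0) - RtoC alpha * 1)%C with (RtoC (1 - alpha)).
  field. apply one_m_alpha_nz.
  unfold RtoC, Cminus, Cplus, Copp, Cmult; apply injective_projections; simpl; ring.
Qed.

Lemma Re_div_real (z : C) (d : R) : d <> 0 -> Re (z / RtoC d)%C = Re z / d.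
Proof. intros. unfold Cdiv, Cinv, Cmult, Re, RtoC; simpl. field. auto. Qed.

Lemma pe_pos eps : Cmod eps <= 1 -> forall z, Cmod z < 1 -> 0 < Re (pe eps z).
Proof.
  intros He z Hz. destruct (Dprops z Hz) as [_ [_ H]]. unfold pe. rewrite Re_div_real by lra.
  apply Rdiv_lt_0_compat; [|lra].
  pose proof (Re_ge_negCmod (eps * Dg z)%C). rewrite Cmod_mult in H0.
  pose proof (Cmod_ge_0 (Dg z)). pose proof (Cmod_ge_0 eps).
  assert (Cmod eps * Cmod (Dg z) <= Cmod (Dg z)) by nra.
  change (Re (Dh z) - alpha > Cmod (Dg z)) in H.
  change (0 < Re (Dh z) + Re (eps * Dg z)%C - alpha). lra.
Qed.

Lemma LB z : Cmod z < 1 -> alpha + (1 - alpha) * (1 - Cmod z) / (1 + Cmod z) <= Re (Dh z) - Cmod (Dg z).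
Proof.
  intros Hz. destruct (unit_of (Dg z)) as [v [Hv Ev]].
  set (eps := (- Cconj v)%C).
  assert (He : Cmod eps <= 1) by (unfold eps; rewrite Cmod_opp, Cmod_conj; lra).
  destruct (cara (ce eps) (pe eps) (pe_series eps) (ce0 eps) (pe_pos eps He) z Hz) as [H1 _].
  assert (E : pe eps z = ((Dh z - RtoC (Cmod (Dg z)) - RtoC alpha) / RtoC (1 - alpha))%C).
  { unfold pe, eps. f_equal. rewrite Ev at 1.
    replace (Dh z + - Cconj v * (v * RtoC (Cmod (Dg z))) - RtoC alpha)%C with
      (Dh z - (Cconj v * v) * RtoC (Cmod (Dg z)) - RtoC alpha)%C by ring.
    rewrite (conj_unit v Hv). ring. }
  rewrite E, Re_div_real in H1 by lra.
  change (Re (Dh z - RtoC (Cmod (Dg z)) - RtoC alpha)%C) with (Re (Dh z) - Cmod (Dg z) - alpha) in H1.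
  pose proof (Cmod_ge_0 z).
  assert ((1 - alpha) * ((1 - Cmod z) / (1 + Cmod z)) <= Re (Dh z) - Cmod (Dg z) - alpha).
  { apply Rmult_le_reg_r with (/ (1 - alpha)). apply Rinv_0_lt_compat; lra.
    replace ((1 - alpha) * ((1 - Cmod z) / (1 + Cmod z)) * / (1 - alpha)) with ((1 - Cmod z) / (1 + Cmod z)) by (field; lra).
    auto. }
  unfold Rdiv in *. lra.
Qed.

Lemma UB z : Cmod z < 1 -> Cmod (Dh z) + Cmod (Dg z) <= alpha + (1 - alpha) * (1 + Cmod z) / (1 - Cmod z).
Proof.
  intros Hz. destruct (unit_of (Dg z)) as [v [Hv Ev]]. destruct (unit_of (Dh z)) as [u [Hu Eu]].
  set (eps := (u * Cconj v)%C).
  assert (He : Cmod eps <= 1) by (unfold eps; rewrite Cmod_mult, Cmod_conj, Hu, Hv; lra).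
  destruct (cara (ce eps) (pe eps) (pe_series eps) (ce0 eps) (pe_pos eps He) z Hz) as [_ H2].
  assert (E : (Dh z + eps * Dg z)%C = (u * RtoC (Cmod (Dh z) + Cmod (Dg z)))%C).
  { unfold eps. set (A := Cmod (Dh z)) in *. set (B := Cmod (Dg z)) in *. rewrite Eu, Ev. rewrite RtoC_plus.
    replace (u * RtoC A + u * Cconj v * (v * RtoC B))%C with (u * RtoC A + u * (Cconj v * v) * RtoC B)%C by ring.
    rewrite (conj_unit v Hv). ring. }
  assert (E2 : (Dh z + eps * Dg z)%C = (RtoC (1 - alpha) * pe eps z + RtoC alpha)%C).
  { unfold pe. field. apply one_m_alpha_nz. }
  assert (Cmod (Dh z) + Cmod (Dg z) = Cmod (Dh z + eps * Dg z)).
  { rewrite E, Cmod_mult, Hu, Cmod_R, Rabs_pos_eq. ring. pose proof (Cmod_ge_0 (Dh z)). pose proof (Cmod_ge_0 (Dg z)). lra. }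
  rewrite H, E2. eapply Rle_trans. apply Cmod_triangle. rewrite Cmod_mult, !Cmod_R, !Rabs_pos_eq by lra.
  pose proof (Cmod_ge_0 z). 
  assert ((1 - alpha) * Cmod (pe eps z) <= (1 - alpha) * ((1 + Cmod z) / (1 - Cmod z))) by (apply Rmult_le_compat_l; lra).
  unfold Rdiv in *. lra.
Qed.

End Main.

Section Radial.
Variable alpha : R.
Hypothesis Ha : 0 <= alpha < 1.
Variables (h g : C -> C) (a b : nat -> C).
Hypothesis Has : series_on_disk a h.
Hypothesis Hbs : series_on_disk b g.
Hypothesis Ha0 : a O = RtoC 0.
Hypothesis Ha1 : a 1%nat = RtoC 1.
Hypothesis Hb0 : b O = RtoC 0.
Hypothesis Hb1 : b 1%nat = RtoC 0.
Hypothesis Hder : forall z : C, Cmod z < 1 ->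
     exists dh dg : C, is_derive h z dh /\ is_derive g z dg /\ Re (Cminus dh (RtoC alpha)) > Cmod dg.

Definition phi (w u : C) (t : R) : R := Re (w * h (RtoC t * u))%C + Re (w * Cconj (g (RtoC t * u)))%C.
Definition dphi (w u : C) (t : R) : R :=
  Re (w * (Dh h (RtoC t * u) * u))%C + Re (w * Cconj (Dg g (RtoC t * u) * u))%C.

Lemma tu_mod (u : C) (t : R) : Cmod u = 1 -> 0 <= t -> Cmod (RtoC t * u)%C = t.
Proof. intros Hu Ht. rewrite Cmod_mult, Hu, Cmod_R, Rabs_pos_eq; lra. Qed.

Lemma phi_deriv (w u : C) (t : R) : Cmod w <= 1 -> Cmod u = 1 -> Cmod (RtoC t * u)%C < 1 ->
  derivable_pt_lim (phi w u) t (dphi w u t).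
Proof.
  intros Hw Hu Ht. destruct (Dprops alpha h g Hder _ Ht) as [H1 [H2 _]].
  apply (derivable_pt_lim_plus (fun t => Re (w * h (RtoC t * u))%C) (fun t => Re (w * Cconj (g (RtoC t * u)))%C)).
  - apply (chain_dir (fun X => Re (w * X)%C)); auto. apply Lre_add. apply Lre_sc. intros; apply Lre_b; auto.
  - apply (chain_dir (fun X => Re (w * Cconj X)%C)); auto. apply Lrc_add. apply Lrc_sc. intros; apply Lrc_b; auto.
Qed.

Lemma phi_0 (w u : C) : phi w u 0 = 0.
Proof.
  unfold phi. replace (RtoC 0 * u)%C with (RtoC 0) by ring.
  rewrite (ser_at0 a h Has), (ser_at0 b g Hbs), Ha0, Hb0. rewrite Cconj_RtoC.
  unfold Re, Cmult, RtoC; simpl. ring.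
Qed.

Lemma radial_lower z : Cmod z < 1 -> lower_bd alpha (Cmod z) <= Cmod (h z + Cconj (g z))%C.
Proof.
  intros Hz. pose proof (Cmod_ge_0 z). set (r := Cmod z) in *.
  destruct (unit_of z) as [u [Hu Ez]]. fold r in Ez.
  set (w := Cconj u). assert (Hw : Cmod w = 1) by (unfold w; rewrite Cmod_conj; auto).
  assert (Hwu : (w * u)%C = RtoC 1) by (apply conj_unit; auto).
  assert (Hmono : (fun t => phi w u t - lower_bd alpha t) 0 <= (fun t => phi w u t - lower_bd alpha t) r).
  { apply (mono_from_deriv (fun t => phi w u t - lower_bd alpha t) (fun t => dphi w u t - (alpha + (1 - alpha) * (1 - t) / (1 + t)))); auto.
    - intros t Ht. assert (Htu : Cmod (RtoC t * u)%C < 1) by (rewrite tu_mod; lra).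
      apply (derivable_pt_lim_minus (phi w u) (lower_bd alpha)).
      apply phi_deriv; auto; lra. apply deriv_lower; auto. rewrite Rabs_pos_eq; lra.
    - intros t Ht. assert (Htu : Cmod (RtoC t * u)%C < 1) by (rewrite tu_mod; lra).
      pose proof (LB alpha Ha h g a b Has Hbs Ha1 Hb1 Hder _ Htu) as HL. rewrite tu_mod in HL by (auto; lra).
      unfold dphi. set (D1 := Dh h (RtoC t * u)%C) in *. set (D2 := Dg g (RtoC t * u)%C) in *.
      replace (w * (D1 * u))%C with (D1 * (w * u))%C by ring. rewrite Hwu, Cmult_1_r.
      pose proof (Re_ge_negCmod (w * Cconj (D2 * u))%C). rewrite Cmod_mult, Cmod_conj, Cmod_mult, Hw, Hu in H0.
      lra. }
  simpl in Hmono. rewrite phi_0, lower_0 in Hmono.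
  unfold phi in Hmono. replace (RtoC r * u)%C with z in Hmono by (rewrite Ez; ring).
  rewrite <- Lre_add in Hmono. pose proof (Re_le_Cmod (w * (h z + Cconj (g z)))%C).
  rewrite Cmod_mult, Hw in H0. lra.
Qed.

Lemma radial_upper z : Cmod z < 1 -> Cmod (h z + Cconj (g z))%C <= upper_bd alpha (Cmod z).
Proof.
  intros Hz. pose proof (Cmod_ge_0 z). set (r := Cmod z) in *.
  destruct (unit_of z) as [u [Hu Ez]]. fold r in Ez.
  destruct (unit_of (h z + Cconj (g z))%C) as [v [Hv Ev]].
  set (w := Cconj v). assert (Hw : Cmod w = 1) by (unfold w; rewrite Cmod_conj; auto).
  assert (Hwv : (w * v)%C = RtoC 1) by (apply conj_unit; auto).
  assert (Hmono : (fun t => upper_bd alpha t - phi w u t) 0 <= (fun t => upper_bd alpha t - phi w u t) r).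
  { apply (mono_from_deriv (fun t => upper_bd alpha t - phi w u t) (fun t => (alpha + (1 - alpha) * (1 + t) / (1 - t)) - dphi w u t)); auto.
    - intros t Ht. assert (Htu : Cmod (RtoC t * u)%C < 1) by (rewrite tu_mod; lra).
      apply (derivable_pt_lim_minus (upper_bd alpha) (phi w u)).
      apply deriv_upper; auto. rewrite Rabs_pos_eq; lra. apply phi_deriv; auto; lra.
    - intros t Ht. assert (Htu : Cmod (RtoC t * u)%C < 1) by (rewrite tu_mod; lra).
      pose proof (UB alpha Ha h g a b Has Hbs Ha1 Hb1 Hder _ Htu) as HU. rewrite tu_mod in HU by (auto; lra).
      unfold dphi. set (D1 := Dh h (RtoC t * u)%C) in *. set (D2 := Dg g (RtoC t * u)%C) in *.
      pose proof (Re_le_Cmod (w * (D1 * u))%C). pose proof (Re_le_Cmod (w * Cconj (D2 * u))%C).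
      rewrite !Cmod_mult, Hw, Hu in H0. rewrite !Cmod_mult, Cmod_conj, Cmod_mult, Hw, Hu in H1.
      lra. }
  simpl in Hmono. rewrite phi_0, upper_0 in Hmono.
  unfold phi in Hmono. replace (RtoC r * u)%C with z in Hmono by (rewrite Ez; ring).
  rewrite <- Lre_add in Hmono. rewrite Ev in Hmono at 1.
  replace (w * (v * RtoC (Cmod (h z + Cconj (g z)))))%C with ((w * v) * RtoC (Cmod (h z + Cconj (g z))))%C in Hmono by ring.
  rewrite Hwv, Cmult_1_l in Hmono. simpl in Hmono. lra.
Qed.

End Radial.

Definition fr (alpha : R) (n : nat) : R :=
  match n with O => 0 | S O => 1 | _ => cf alpha n end.

Lemma falpha_fr alpha n : falpha_coef alpha n = RtoC (fr alpha n).
Proof. destruct n as [|[|n]]; reflexivity. Qed.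

Lemma fr_bound alpha n : 0 <= alpha < 1 -> 0 <= fr alpha n <= 1.
Proof.
  intros Ha. destruct n as [|[|n]]; unfold fr; try lra. unfold cf.
  assert (2 <= INR (S (S n))) by (apply (le_INR 2); lia).
  split. apply Rdiv_le_0_compat; lra.
  apply Rmult_le_reg_r with (INR (S (S n))). lra. unfold Rdiv. rewrite Rmult_assoc, Rinv_l by lra. nra.
Qed.

Lemma falpha_ex alpha : 0 <= alpha < 1 -> forall z, exists l, Cmod z < 1 -> is_pseries (falpha_coef alpha) z l.
Proof.
  intros Ha z. destruct (Rlt_dec (Cmod z) 1) as [Hz|Hz].
  - assert (Hex : ex_series (K:=C_AbsRing) (V:=C_CompleteNormedModule) (fun n => falpha_coef alpha n * Cpow z n)%C).
    { apply (ex_series_le (K:=C_AbsRing) (V:=C_CompleteNormedModule)) with (b := fun n => Cmod z ^ n).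
      - intros n. change (Cmod (falpha_coef alpha n * Cpow z n)%C <= Cmod z ^ n).
        rewrite Cmod_mult, Cmod_pow, falpha_fr, Cmod_R, Rabs_pos_eq by (apply fr_bound; auto).
        pose proof (fr_bound alpha n Ha). pose proof (pow_le (Cmod z) n (Cmod_ge_0 z)). nra.
      - exists (/ (1 - Cmod z)). apply is_series_geom. rewrite Rabs_pos_eq; auto. apply Cmod_ge_0. }
    destruct Hex as [l Hl]. exists l. intros _. apply is_pseries_C. exact Hl.
  - exists (RtoC 0). intros H. lra.
Qed.

Lemma falpha_exists alpha : 0 <= alpha < 1 -> exists F : C -> C, series_on_disk (falpha_coef alpha) F.
Proof.
  intros Ha. exists (fun z => proj1_sig (constructive_indefinite_description _ (falpha_ex alpha Ha z))).
  intros z Hz. destruct (constructive_indefinite_description _ (falpha_ex alpha Ha z)) as [l Hl]. simpl. auto.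
Qed.

Lemma falpha_PH0 alpha : 0 <= alpha < 1 -> forall F, series_on_disk (falpha_coef alpha) F ->
  in_PH0 alpha F (fun _ => RtoC 0).
Proof.
  intros Ha F HF. split.
  - exists (falpha_coef alpha), (fun _ => RtoC 0). split; auto. split.
    + intros z Hz. apply is_pseries_C. eapply Cis_ext; [|apply Cis_zero]. intros; simpl. ring.
    + repeat split; reflexivity.
  - intros z Hz. destruct (ps_deriv _ F HF z Hz) as [l [Hl Hd]]. exists l, (RtoC 0).
    split; auto. split. apply (is_derive_const (K:=C_AbsRing) (V:=C_NormedModule)).
    rewrite Cmod_0.
    assert (Hnz : (1 - z)%C <> RtoC 0).
    { apply C_neq0_of_Cmod. eapply Rlt_le_trans; [|apply Cmod_1_minus]. lra. }
    assert (HG := Cis_plus _ _ _ _ (Cis_scal (RtoC (2 * (1 - alpha))) _ _ (Cgeom z Hz))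
                   (Cis_scal (RtoC (1 - 2 * (1 - alpha))) _ _ (Cis_delta0 (fun m => Cpow z m)))).
    assert (El : l = (RtoC (2 * (1 - alpha)) * / (1 - z) + RtoC (1 - 2 * (1 - alpha)) * Cpow z 0)%C).
    { apply (Cis_unique _ _ _ Hl). eapply Cis_ext; [|exact HG]. intros n.
      match goal with |- ?a = ?b => change (@eq C a b) end. destruct n as [|k].
      - simpl. unfold falpha_coef. apply injective_projections; simpl; ring.
      - simpl (S k =? 0)%nat. rewrite falpha_fr. unfold fr.
        replace (RtoC (INR (S (S k))) * RtoC (cf alpha (S (S k))))%C with (RtoC (2 * (1 - alpha))).
        ring. rewrite <- RtoC_mult, INR_cf. auto. }
    assert (E : (l - RtoC alpha)%C = (RtoC (1 - alpha) * ((1 + z) / (1 - z)))%C).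
    { rewrite El. simpl. 
      replace (RtoC (2 * (1 - alpha))) with (2 * (1 - RtoC alpha))%C
        by (apply injective_projections; simpl; ring).
      replace (RtoC (1 - 2 * (1 - alpha))) with (1 - 2 * (1 - RtoC alpha))%C
        by (apply injective_projections; simpl; ring).
      replace (RtoC (1 - alpha)) with (1 - RtoC alpha)%C
        by (apply injective_projections; simpl; ring).
      field. auto. }
    rewrite E, Re_scal_real. destruct (ReK_bound z (Cmod z) eq_refl Hz) as [H1 _].
    pose proof (Cmod_ge_0 z). assert (0 < (1 - Cmod z) / (1 + Cmod z)) by (apply Rdiv_lt_0_compat; lra).
    apply Rlt_gt. apply Rmult_lt_0_compat; lra.
Qed.

Lemma F_real alpha F x : series_on_disk (falpha_coef alpha) F -> Rabs x < 1 ->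
  forall V, is_series (fun n => fr alpha n * x ^ n) V -> F (RtoC x) = RtoC V.
Proof.
  intros HF Hx V HV. assert (Cmod (RtoC x) < 1) by (rewrite Cmod_R; auto).
  specialize (HF _ H). apply is_pseries_C in HF. apply (Cis_unique _ _ _ HF).
  eapply Cis_ext; [|apply Ris_to_Cis, HV]. intros n. rewrite falpha_fr, RtoC_mult, RtoC_pow. auto.
Qed.

Lemma F_values alpha : 0 <= alpha < 1 -> forall F, series_on_disk (falpha_coef alpha) F ->
  forall r, 0 <= r < 1 -> Cmod (F (RtoC r)) = upper_bd alpha r /\ Cmod (F (RtoC (- r))) = lower_bd alpha r.
Proof.
  intros Ha F HF r Hr. assert (Hr' : Rabs r < 1) by (rewrite Rabs_pos_eq; lra).
  split.
  - assert (HU : is_series (fun n => cf alpha n * r ^ n) (PSeries (cf alpha) r)).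
    { apply is_pseries_R. apply PSeries_correct. apply CV_radius_inside. apply CV_UA; auto. }
    pose proof (is_series_plus _ _ _ _ HU (delta_is r 1)) as HS.
    rewrite (F_real alpha F r HF Hr' (PSeries (cf alpha) r + r)).
    + rewrite Cmod_R, Rabs_pos_eq. rewrite upper_eq. ring.
      rewrite Rplus_comm, <- upper_eq. apply upper_nonneg; auto.
    + eapply is_series_ext; [|exact HS]. intros n. change (cf alpha n * r ^ n + (if (n =? 1)%nat then r else 0) = fr alpha n * r ^ n).
      destruct n as [|[|n]]; simpl; unfold cf; ring.
  - assert (Hr'' : Rabs (- r) < 1) by (rewrite Rabs_Ropp; auto).
    assert (HL : is_series (fun n => LA alpha n * r ^ n) (PSeries (LA alpha) r)).
    { apply is_pseries_R. apply PSeries_correct. apply CV_radius_inside. apply CV_LA; auto. }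
    apply (is_series_scal_l (K:=R_AbsRing) (V:=R_NormedModule) (-1)) in HL.
    pose proof (is_series_plus _ _ _ _ HL (delta_is (- r) 1)) as HS.
    rewrite (F_real alpha F (- r) HF Hr'' (scal (-1) (PSeries (LA alpha) r) + - r)).
    + change (scal (-1) (PSeries (LA alpha) r)) with ((-1) * PSeries (LA alpha) r).
      rewrite Cmod_R. rewrite Rabs_left1. rewrite lower_eq. ring.
      assert (0 <= lower_bd alpha r) by (apply lower_nonneg; auto). rewrite lower_eq in H. lra.
    + eapply is_series_ext; [|exact HS]. intros n.
      change ((-1) * (LA alpha n * r ^ n) + (if (n =? 1)%nat then - r else 0) = fr alpha n * (- r) ^ n).
      unfold LA. destruct n as [|[|n]]; simpl; unfold cf; try ring.
      replace (S (S n) - 1)%nat with (S n) by lia.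
      replace (- r) with ((-1) * r) by ring. rewrite Rpow_mult_distr. simpl. ring.
Qed.

Theorem theorem2p1 (alpha : R) (Halpha : 0 <= alpha < 1) :
  (forall h g : C -> C, in_PH0 alpha h g ->
     forall z : C, Cmod z < 1 ->
       lower_bd alpha (Cmod z) <= Cmod (Cplus (h z) (Cconj (g z)))
       /\ Cmod (Cplus (h z) (Cconj (g z))) <= upper_bd alpha (Cmod z)) /\
  (exists F : C -> C, series_on_disk (falpha_coef alpha) F) /\
  (forall F : C -> C, series_on_disk (falpha_coef alpha) F ->
     in_PH0 alpha F (fun _ => RtoC 0) /\
     forall r : R, 0 <= r < 1 ->
       Cmod (F (RtoC r)) = upper_bd alpha r /\
       Cmod (F (RtoC (- r))) = lower_bd alpha r).
Proof.
  split; [|split].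
  - intros h g [[a [b [Has [Hbs [Ha0 [Ha1 [Hb0 Hb1]]]]]]] Hder] z Hz. split.
    + apply (radial_lower alpha Halpha h g a b Has Hbs Ha0 Ha1 Hb0 Hb1 Hder z Hz).
    + apply (radial_upper alpha Halpha h g a b Has Hbs Ha0 Ha1 Hb0 Hb1 Hder z Hz).
  - apply falpha_exists; auto.
  - intros F HF. split. apply falpha_PH0; auto. intros r Hr. apply F_values; auto.
Qed.
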